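(* Let $\mathfrak S=(S,\xrightarrow{F},\leq)$ be an $\infty$-effective complete WSTS and let $s_0\in S$. The following statements are equivalent: (1) $(\mathfrak S,s_0)$ is clover-flattable; (2) $(\mathfrak S,s_0)$ is weakly clover-flattable; (3) $(\mathfrak S,s_0)$ is strongly clover-flattable; (4) the procedure $\mathbf{Clover}_{\mathfrak S}$ terminates on input $s_0$.
   Context: Order theory. For a poset $(S,\le)$ and $E\subseteq S$, $\downarrow E=\{y\mid \exists x\in E, y\le x\}$, $\uparrow E$ dually, $\operatorname{Max}E$ is the set of maximal elements of $E$. A directed subset is a nonempty $D$ in which any two elements have an upper bound in $D$; $(S,\le)$ is a dcpo if every directed $D$ has a least upper bound $\bigvee D$. For $E\subseteq S$, $\operatorname{Lub}(E)=\{\bigvee D\mid D\subseteq E \text{ directed}\}$. $x\ll y$ iff for every directed $D$ with $y\le\bigvee D$ there is $z\in D$ with $x\le z$; a dcpo is continuous if for every $x$, $\{y\mid y\ll x\}$ is directed with lub $x$. A set $U$ is Scott-open if it is upward-closed and every directed $D$ with $\bigvee D\in U$ meets $U$; closed sets are complements of open sets and $cl(A)$ is the smallest closed set containing $A$. A map between dcpos is continuous if it is monotone and preserves lubs of directed sets. A partial order is a wpo if it is well-founded and has no infinite antichain; a continuous dcwo is a wpo which is also a continuous dcpo. Transition systems. A functional transition system $(S,\xrightarrow{F})$ is given by a finite set $F$ of partial maps $S\rightharpoonup S$, with $s\to s'$ iff $s'=f(s)$ for some $f\in F$ with $s\in\operatorname{dom}f$. $Post(A)$ is the set of one-step successors of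 $A$, $Post^*$ its reflexive-transitive iterate; for an ordered system, $Cover_{\mathfrak S}(s)=\downarrow Post^*(\downarrow s)$. $F^*$ denotes the set of finite compositions of maps of $F$ (a word $g_1g_2$ denotes $g_2\circ g_1$). A partial map $f$ on a dcpo is partial continuous if $\operatorname{dom}f$ is Scott-open and $f(\bigvee D)=\bigvee f(D)$ for every directed $D\subseteq \operatorname{dom}f$. A complete transition system is a functional transition system $(S,\xrightarrow{F},\le)$ where $(S,\le)$ is a continuous dcwo and every $f\in F$ is partial continuous; a complete WSTS is such a system (it is then a WSTS: well-ordered and monotonic). Lub-acceleration: for partial continuous $g$, $g^\infty$ has domain $\operatorname{dom}g$, and $g^\infty(x)=\bigvee_{n\in\mathbb N} g^n(x)$ if $x<g(x)$, $g^\infty(x)=g(x)$ otherwise. The system is $\infty$-effective if it is effective (states are finitely coded, $\le$ is decidable, for each $f\in F$ membership in $\operatorname{dom} f$ is decidable and $f$ is computable) and $g^\infty$ is computable for every $g\in F^*$. Procedure $\mathbf{Clover}_{\mathfrak S}(s_0)$: 1. $A\leftarrow\{s_0\}$; 2. while $Post(A)\not\le^\flat A$ do: (a) choose fairly $(g,a)\in F^*\times A$ with $a\in\operatorname{dom}g$; (b) $A\leftarrow A\cup\{g^\infty(a)\}$; 3. return $\operatorname{Max}A$. Here $B\le^\flat C$ iff $\downarrow B\subseteq\downarrow C$. Writing $A_m$ for the value of $A$ after $m$ iterations, the choice is fair if on every infinite execution every pair $(g,a)\in F^*\times A_m$ with $a\in\operatorname{dom} g$ is picked at some later stage. Flattening.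 A functional transition system is flat if there are finitely many words $w_1,\dots,w_k\in F^*$ such that every sequence of transitions fireable (from the initial state under consideration) lies in the language $w_1^*w_2^*\cdots w_k^*$. A morphism $\varphi:(S_1,\xrightarrow{F_1})\to(S_2,\xrightarrow{F_2})$ is a pair of maps $S_1\to S_2$, $F_1\to F_2$ (both written $\varphi$) such that whenever $s\in\operatorname{dom}f_1$ and $s'=f_1(s)$ then $\varphi(s)\in\operatorname{dom}\varphi(f_1)$ and $\varphi(s')=\varphi(f_1)(\varphi(s))$. A continuous flattening of a complete transition system $\mathfrak S_2$ is a pair $(\mathfrak S_1,\varphi)$ where $\mathfrak S_1$ is a flat complete transition system and $\varphi$ is a morphism whose state map is Scott-continuous. $(\mathfrak S,s_0)$ is clover-flattable iff there are a continuous flattening $(\mathfrak S_1,\varphi)$ of $\mathfrak S$ and a state $s_1$ of $\mathfrak S_1$ (flat from $s_1$) with $\varphi(s_1)=s_0$ and $cl(Cover_{\mathfrak S}(s_0))=cl(\varphi\langle cl(Cover_{\mathfrak S_1}(s_1))\rangle)$; it is weakly clover-flattable if instead $\varphi(s_1)\le s_0$ and $cl(Cover_{\mathfrak S}(s_0))\subseteq cl(\varphi\langle cl(Cover_{\mathfrak S_1}(s_1))\rangle)$. An rl-automaton over alphabet $F$ is a deterministic finite automaton $\mathcal A=(F,Q,\delta,q_0)$ with partial transition function $\delta$ and all states final, recognizing a language of the form $\operatorname{Pfx}(w_1^*\cdots w_k^* )$ (prefixes of words of $w_1^*\cdots w_k^*$, $w_i\in F^*$). The synchronized product $\mathfrak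 S\times\mathcal A$ has states $S\times Q$, order $(s,q)\le(s',q')$ iff $s\le s'$ and $q=q'$, and maps $f\bowtie\delta:(s,q)\mapsto(f(s),\delta(q,f))$ (defined when $s\in\operatorname{dom}f$ and $\delta(q,f)$ is defined), for each $f\in F$ such that $\delta(q,f)$ is defined for some $q$; $\pi_1(s,q)=s$. $(\mathfrak S,s_0)$ is strongly clover-flattable iff there is an rl-automaton $\mathcal A$ with initial state $q_0$ such that $cl(Cover_{\mathfrak S}(s_0))=cl(\pi_1\langle cl(Cover_{\mathfrak S\times\mathcal A}(s_0,q_0))\rangle)$. *)

(* Defs.v *)
From mathcomp Require Import all_boot.
Set Implicit Arguments. Unset Strict Implicit. Unset Printing Implicit Defensive.

Section Order.
Variables (S : Type) (le : S -> S -> Prop).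

Definition partial_order : Prop :=
  (forall x, le x x) /\ (forall x y, le x y -> le y x -> x = y) /\
  (forall x y z, le x y -> le y z -> le x z).

Definition lt (x y : S) : Prop := le x y /\ x <> y.

Definition directed (D : S -> Prop) : Prop :=
  (exists x, D x) /\
  forall x y, D x -> D y -> exists z, D z /\ le x z /\ le y z.

Definition is_lub (D : S -> Prop) (l : S) : Prop :=
  (forall y, D y -> le y l) /\ (forall u, (forall y, D y -> le y u) -> le l u).

Definition dcpo : Prop := forall D, directed D -> exists l, is_lub D l.

Definition way_below (x y : S) : Prop :=
  forall D l, directed D -> is_lub D l -> le y l -> exists z, D z /\ le x z.

Definition continuous_dcpo : Prop :=
  dcpo /\ forall x, directed (fun y => way_below y x) /\
                    is_lub (fun y => way_below y x) x.

Definition wpo : Prop :=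
  well_founded lt /\
  ~ (exists a : nat -> S, forall i j, i <> j -> ~ le (a i) (a j)).

Definition down (A : S -> Prop) (x : S) : Prop := exists y, A y /\ le x y.

Definition upward_closed (U : S -> Prop) : Prop :=
  forall x y, U x -> le x y -> U y.

Definition scott_open (U : S -> Prop) : Prop :=
  upward_closed U /\
  forall D l, directed D -> is_lub D l -> U l -> exists d, D d /\ U d.

Definition scott_closed (C : S -> Prop) : Prop := scott_open (fun x => ~ C x).

Definition cl (A : S -> Prop) (x : S) : Prop :=
  forall C, scott_closed C -> (forall y, A y -> C y) -> C x.

Definition dom (f : S -> option S) (x : S) : Prop := f x <> None.

Definition partial_continuous (f : S -> option S) : Prop :=
  scott_open (dom f) /\
  forall D l, directed D -> (forall d, D d -> dom f d) -> is_lub D l ->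
    exists y, f l = Some y /\ is_lub (fun z => exists d, D d /\ f d = Some z) y.

End Order.

Definition image (A B : Type) (h : A -> B) (X : A -> Prop) (y : B) : Prop :=
  exists x, X x /\ h x = y.

Definition scott_continuous (S1 S2 : Type) (le1 : S1 -> S1 -> Prop)
    (le2 : S2 -> S2 -> Prop) (h : S1 -> S2) : Prop :=
  (forall x y, le1 x y -> le2 (h x) (h y)) /\
  (forall D l, directed le1 D -> is_lub le1 D l -> is_lub le2 (image h D) (h l)).

Definition set_eq (A : Type) (X Y : A -> Prop) : Prop := forall x, X x <-> Y x.
Definition subset (A : Type) (X Y : A -> Prop) : Prop := forall x, X x -> Y x.

Fixpoint in_lang (L : Type) (ws : seq (seq L)) (u : seq L) : Prop :=
  match ws with
  | [::] => u = [::]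
  | w :: ws' => exists n u2, u = flatten (nseq n w) ++ u2 /\ in_lang ws' u2
  end.

Record TS := MkTS {
  st : Type;
  le : st -> st -> Prop;
  lab : finType;
  act : lab -> st -> option st }.

Section TSdefs.
Variable T : TS.

(** a word g1 g2 ... gn denotes gn o ... o g1 *)
Fixpoint run (w : seq (lab T)) (s : st T) : option (st T) :=
  match w with
  | [::] => Some s
  | f :: w' => match act f s with Some s' => run w' s' | None => None end
  end.

Fixpoint iterp (g : st T -> option (st T)) (n : nat) (x : st T) : option (st T) :=
  match n with
  | 0 => Some x
  | n'.+1 => match iterp g n' x with Some y => g y | None => None end
  end.

Definition complete_ts : Prop :=
  partial_order (@le T) /\ continuous_dcpo (@le T) /\ wpo (@le T) /\
  forall f, partial_continuous (@le T) (act f).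

Definition post (A : st T -> Prop) (s' : st T) : Prop :=
  exists a f, A a /\ act f a = Some s'.

Definition reach (s s' : st T) : Prop := exists w, run w s = Some s'.

Definition cover (s : st T) (x : st T) : Prop :=
  exists y z, le y s /\ reach y z /\ le x z.

Definition accel (w : seq (lab T)) (x y : st T) : Prop :=
  exists gx, run w x = Some gx /\
   ((lt (@le T) x gx /\
       is_lub (@le T) (fun z => exists n, iterp (run w) n x = Some z) y) \/
    (~ lt (@le T) x gx /\ y = gx)).

(** infinity-effectiveness: finite coding of states, decidable order,
    decidable domains (the maps [act f] themselves are Rocq functions),
    and a function computing g^oo for every g in F^*. *)
Definition infty_effective : Prop :=
  (exists code : st T -> nat, injective code) /\
  (exists leb : st T -> st T -> bool, forall x y, le x y <-> leb x y = true) /\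
  (forall f, exists domb : st T -> bool, forall x, dom (act f) x <-> domb x = true) /\
  (exists acc : seq (lab T) -> st T -> st T,
      forall w x, dom (run w) x -> accel w x (acc w x)).

(** The procedure Clover. An execution is given by the chosen pairs
    (w m, a m) and the added elements b m = (w m)^oo (a m);
    A_m = {s0} U {b k | k < m}. *)
Definition clover_set (s0 : st T) (b : nat -> st T) (m : nat) (x : st T) : Prop :=
  x = s0 \/ exists k, (k < m)%N /\ x = b k.

Definition clover_stop (A : st T -> Prop) : Prop :=
  subset (down (@le T) (post A)) (down (@le T) A).

Definition clover_fair_infinite_run (s0 : st T)
    (w : nat -> seq (lab T)) (a b : nat -> st T) : Prop :=
  (forall m, ~ clover_stop (clover_set s0 b m) /\
             clover_set s0 b m (a m) /\ accel (w m) (a m) (b m)) /\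
  (forall m g x, clover_set s0 b m x -> dom (run g) x ->
      exists m', (m <= m')%N /\ w m' = g /\ a m' = x).

Definition clover_terminates (s0 : st T) : Prop :=
  ~ exists w a b, clover_fair_infinite_run s0 w a b.

Definition flat_from (s : st T) : Prop :=
  exists ws : seq (seq (lab T)), forall u, run u s <> None -> in_lang ws u.

End TSdefs.

Definition ts_morphism (T1 T2 : TS) (hs : st T1 -> st T2) (hl : lab T1 -> lab T2) : Prop :=
  forall f s s', act f s = Some s' -> act (hl f) (hs s) = Some (hs s').

Definition clover_flattable (T : TS) (s0 : st T) : Prop :=
  exists (T1 : TS) (hs : st T1 -> st T) (hl : lab T1 -> lab T) (s1 : st T1),
    complete_ts T1 /\ flat_from s1 /\ ts_morphism hs hl /\
    scott_continuous (@le T1) (@le T) hs /\ hs s1 = s0 /\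
    set_eq (cl (@le T) (cover s0))
           (cl (@le T) (image hs (cl (@le T1) (cover s1)))).

Definition weakly_clover_flattable (T : TS) (s0 : st T) : Prop :=
  exists (T1 : TS) (hs : st T1 -> st T) (hl : lab T1 -> lab T) (s1 : st T1),
    complete_ts T1 /\ flat_from s1 /\ ts_morphism hs hl /\
    scott_continuous (@le T1) (@le T) hs /\ le (hs s1) s0 /\
    subset (cl (@le T) (cover s0))
           (cl (@le T) (image hs (cl (@le T1) (cover s1)))).

Section Automata.
Variables (L : finType) (Q : finType) (delta : Q -> L -> option Q).

Fixpoint drun (u : seq L) (q : Q) : option Q :=
  match u with
  | [::] => Some q
  | f :: u' => match delta q f with Some q' => drun u' q' | None => None end
  end.

(** recognized language (all states final) is Pfx(w1^* ... wk^* ) *)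
Definition rl_automaton (q0 : Q) : Prop :=
  exists ws : seq (seq L),
    forall u, drun u q0 <> None <-> exists v, in_lang ws (u ++ v).

Definition prod_lab : predArgType :=
  {f : L | [exists q, delta q f != None]}.
End Automata.

Definition sync_product (T : TS) (Q : finType) (delta : Q -> lab T -> option Q) : TS :=
  @MkTS (st T * Q)
    (fun p p' => le p.1 p'.1 /\ p.2 = p'.2)
    (prod_lab delta)
    (fun f p => match act (val f) p.1, delta p.2 (val f) with
                | Some s', Some q' => Some (s', q')
                | _, _ => None end).

Definition strongly_clover_flattable (T : TS) (s0 : st T) : Prop :=
  exists (Q : finType) (delta : Q -> lab T -> option Q) (q0 : Q),
    rl_automaton delta q0 /\
    set_eq (cl (@le T) (cover s0))
      (cl (@le T) (image (fun p : st T * Q => p.1)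
          (cl (@le (sync_product delta)) (@cover (sync_product delta) (s0, q0))))).

(* Main.v *)
Require Import Defs.
From mathcomp Require Import all_boot.
From Stdlib Require Import Classical ClassicalEpsilon Wellfounded.
Import Defs.
Set Implicit Arguments. Unset Strict Implicit. Unset Printing Implicit Defensive.

Section Gen.
Variables (S : Type) (le : S -> S -> Prop).
Hypothesis Hpo : partial_order le.

Lemma lrefl x : le x x. Proof. by case: Hpo. Qed.
Lemma ltrans x y z : le x y -> le y z -> le x z.
Proof. by case: Hpo => _ [_ H]; apply: H. Qed.
Lemma lanti x y : le x y -> le y x -> x = y.
Proof. by case: Hpo => _ [H _]; apply: H. Qed.

Definition pairset (x y : S) := fun z => z = x \/ z = y.

Lemma dir_pair x y : le x y -> directed le (pairset x y).
Proof.
move=> hxy; split; first by exists x; left.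
move=> a c ha hc; exists y; split; first by right.
by case: ha => ->; case: hc => ->; split => //; apply: lrefl.
Qed.

Lemma lub_pair x y : le x y -> is_lub le (pairset x y) y.
Proof.
move=> hxy; split; first by move=> z [->|->] //; apply: lrefl.
by move=> u hu; apply: hu; right.
Qed.

Lemma lub_ub D l d : is_lub le D l -> D d -> le d l.
Proof. by case=> H _; apply: H. Qed.

Lemma pc_mono f x y x' : partial_continuous le f -> le x y -> f x = Some x' ->
  exists y', f y = Some y' /\ le x' y'.
Proof.
move=> [[hup _] hc] hxy hx.
have dy : dom f y by apply: (hup x) => //; rewrite /dom hx.
have := hc (pairset x y) y (dir_pair hxy).
case.
- by move=> d [->|->] //; rewrite /dom hx.
- exact: lub_pair.
move=> y0 [hy0 hl]; exists y0; split => //.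
by apply: (lub_ub hl); exists x; split => //; left.
Qed.

Lemma closed_down C x y : scott_closed le C -> C y -> le x y -> C x.
Proof.
move=> [hup _] hy hxy; apply: NNPP => hx.
exact: (hup x y hx hxy hy).
Qed.

Lemma closed_lub C D l : scott_closed le C -> directed le D -> is_lub le D l ->
  (forall d, D d -> C d) -> C l.
Proof.
move=> [_ ho] hD hl hC; apply: NNPP => hnl.
by case: (ho D l hD hl hnl) => d [hd hnd]; apply: hnd; apply: hC.
Qed.

Lemma sub_cl (A : S -> Prop) x : A x -> cl le A x.
Proof. by move=> hx C _ HC; apply: HC. Qed.

Lemma cl_min (A C : S -> Prop) x : scott_closed le C -> (forall y, A y -> C y) ->
  cl le A x -> C x.
Proof. by move=> hC hAC hx; apply: hx. Qed.

Lemma cl_closed (A : S -> Prop) : scott_closed le (cl le A).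
Proof.
split.
- move=> x y hx hxy hy; apply: hx => C hC hAC.
  exact: (closed_down hC (hy C hC hAC) hxy).
- move=> D l hD hl hnl; apply: NNPP => hno; apply: hnl => C hC hAC.
  apply: (closed_lub hC hD hl) => d hd.
  have : cl le A d by apply: NNPP => hn; apply: hno; exists d.
  by move=> h; apply: h.
Qed.

Lemma cl_mono (A B : S -> Prop) x : (forall y, A y -> B y) -> cl le A x -> cl le B x.
Proof.
move=> hAB hx; apply: (cl_min (cl_closed B)) hx => y hy.
by apply: sub_cl; apply: hAB.
Qed.

Lemma cl_idem (A : S -> Prop) x : cl le (cl le A) x -> cl le A x.
Proof. by move=> hx; apply: (cl_min (cl_closed A)) hx. Qed.

Definition above (D : S -> Prop) d0 := fun e => D e /\ le d0 e.

Lemma above_dir D d0 : directed le D -> D d0 -> directed le (above D d0).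
Proof.
move=> [_ hD] hd0; split; first by exists d0; split => //; apply: lrefl.
move=> x y [hx hx0] [hy hy0].
case: (hD x y hx hy) => z [hz [hxz hyz]].
by exists z; split; [split => //; apply: ltrans hxz|].
Qed.

Lemma above_lub D d0 l : directed le D -> D d0 -> is_lub le D l -> is_lub le (above D d0) l.
Proof.
move=> [_ hD] hd0 [hub hleast]; split; first by move=> y [hy _]; apply: hub.
move=> u hu; apply: hleast => d hd.
case: (hD d d0 hd hd0) => z [hz [hdz hd0z]].
by apply: ltrans hdz _; apply: hu.
Qed.

Definition fimage (f : S -> option S) (D : S -> Prop) :=
  fun z => exists d, D d /\ f d = Some z.

Lemma fimage_dir f D : partial_continuous le f -> directed le D ->
  (forall d, D d -> dom f d) -> directed le (fimage f D).
Proof.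
move=> hf [[d hd] hD] hdom; split.
  by case E: (f d) => [z|]; [exists z, d | by case: (hdom d hd)].
move=> x y [dx [hdx hfx]] [dy [hdy hfy]].
case: (hD dx dy hdx hdy) => z [hz [h1 h2]].
case: (pc_mono hf h1 hfx) => z1 [hz1 hle1].
case: (pc_mono hf h2 hfy) => z2 [hz2 hle2].
rewrite hz1 in hz2; case: hz2 => ?; subst z2.
by exists z1; split => //; exists z.
Qed.

Lemma closed_pre_act f C : partial_continuous le f -> scott_closed le C ->
  scott_closed le (fun x => forall y, f x = Some y -> C y).
Proof.
move=> hf hC; split.
- move=> x x' hx hxx' hx'; apply: hx => y hy.
  case: (pc_mono hf hxx' hy) => y' [hy' hle].
  exact: (closed_down hC (hx' y' hy') hle).
- move=> D l hD hl hnl.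
  have [y [hly hny]] : exists y, f l = Some y /\ ~ C y.
    apply: NNPP => hn; apply: hnl => y hy; apply: NNPP => hc; apply: hn; by exists y.
  have hdl : dom f l by rewrite /dom hly.
  case: hf => [[hup ho] hcont].
  case: (ho D l hD hl hdl) => d0 [hd0 hdd0].
  have hD' := above_dir hD hd0.
  have hl' := above_lub hD hd0 hl.
  have hdom' : forall e, above D d0 e -> dom f e.
    by move=> e [he he0]; apply: (hup d0).
  case: (hcont _ _ hD' hdom' hl') => y' [hy' hly'].
  rewrite hly in hy'; case: hy' => ?; subst y'.
  have hfd := fimage_dir (conj (conj hup ho) hcont) hD' hdom'.
  case: hC => _ hCo.
  case: (hCo _ _ hfd hly' hny) => z [[e [[he _] hfe]] hnz].
  exists e; split => // hall; apply: hnz; exact: hall.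
Qed.

End Gen.

Section TSGen.
Variable T : TS.
Hypothesis Hpo : partial_order (@le T).
Hypothesis Hpc : forall f, partial_continuous (@le T) (act f).

Lemma run_cat (u v : seq (lab T)) x :
  run (u ++ v) x = match run u x with Some y => run v y | None => None end.
Proof. by elim: u x => [|f u IH] x //=; case: (act f x). Qed.

Lemma run_mono u (x y x' : st T) : le x y -> run u x = Some x' ->
  exists y', run u y = Some y' /\ le x' y'.
Proof.
elim: u x y => [|f u IH] x y /=; first by move=> h [<-]; exists y.
move=> hxy; case E: (act f x) => [x1|] // hr.
case: (pc_mono Hpo (Hpc f) hxy E) => y1 [-> h1].
exact: IH h1 hr.
Qed.

Lemma iterpS' (g : st T -> option (st T)) n x :
  iterp g n.+1 x = match g x with Some y => iterp g n y | None => None end.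
Proof.
elim: n x => [|n IH] x /=; first by case: (g x).
rewrite -/(iterp g n.+1 x) IH; case: (g x) => //.
Qed.

Lemma iterp_run (w : seq (lab T)) n x : iterp (run w) n x = run (flatten (nseq n w)) x.
Proof.
elim: n x => [|n IH] x //=.
by rewrite -/(iterp (run w) n.+1 x) iterpS' run_cat; case: (run w x).
Qed.

Lemma iterp_step w (x gx : st T) : run w x = Some gx -> le x gx ->
  forall n z, iterp (run w) n x = Some z ->
    exists z', iterp (run w) n.+1 x = Some z' /\ le z z'.
Proof.
move=> hg hle; elim=> [|n IH] z /=.
  by move=> [<-]; exists gx; rewrite hg.
case E: (iterp (run w) n x) => [y|] // hyz.
case: (IH y E) => y' [hy' hle'].
have hz1 : iterp (run w) n.+1 x = Some z by rewrite /= E.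
rewrite hz1 in hy'; case: hy' => ?; subst y'.
case: (run_mono hle' hyz) => z'' [hz'' hle''].
exists z''; split => //.
by rewrite hyz.
Qed.



Lemma iterp_def w (x gx : st T) : run w x = Some gx -> le x gx ->
  forall n, exists z, iterp (run w) n x = Some z.
Proof.
move=> hg hle; elim=> [|n [z hz]]; first by exists x.
by case: (iterp_step hg hle hz) => z' [hz' _]; exists z'.
Qed.

Lemma iterp_chain w (x gx : st T) : run w x = Some gx -> le x gx ->
  forall n k z z', iterp (run w) n x = Some z -> iterp (run w) (n + k) x = Some z' ->
  le z z'.
Proof.
move=> hg hle n; elim=> [|k IH] z z' hz.
  by rewrite addn0 hz => -[<-]; apply: (lrefl Hpo).
case: (iterp_def hg hle (n + k)) => y hy.
case: (iterp_step hg hle hy) => y' [hy' hle'].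
rewrite addnS hy' => -[<-].
exact: (ltrans Hpo) (IH _ _ hz hy) hle'.
Qed.

Definition iset w (x : st T) := fun z => exists n, iterp (run w) n x = Some z.

Lemma iset_dir w (x gx : st T) : run w x = Some gx -> le x gx -> directed (@le T) (iset w x).
Proof.
move=> hg hle; split; first by exists x, 0.
move=> a c [n ha] [m hc].
case: (iterp_def hg hle (maxn n m)) => z hz.
exists z; split; first by exists (maxn n m).
split.
- by apply: (iterp_chain hg hle (k := maxn n m - n) ha); rewrite subnKC ?leq_maxl.
- by apply: (iterp_chain hg hle (k := maxn n m - m) hc); rewrite subnKC ?leq_maxr.
Qed.

Definition tclosed (X : st T -> Prop) :=
  forall f x y, X x -> act f x = Some y -> X y.

Lemma cl_tclosed X : (forall f x y, X x -> act f x = Some y -> cl (@le T) X y) ->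
  tclosed (cl (@le T) X).
Proof.
move=> hX f x y hx hy.
have hP := closed_pre_act Hpo (Hpc f) (cl_closed (@le T) X).
have := cl_min hP _ hx; apply => //.
by move=> z hz y' hy'; apply: hX hy'.
Qed.

Lemma tclosed_run X : tclosed X -> forall u x y, X x -> run u x = Some y -> X y.
Proof.
move=> hX; elim=> [|f u IH] x y /=; first by move=> hx [<-].
by case E: (act f x) => [z|] // hx hr; apply: IH hr; apply: hX E.
Qed.

Lemma cover_tclosed (s0 : st T) : tclosed (cover s0).
Proof.
move=> f x y [y0 [z [hy0 [[u hu] hxz]]]] hxy.
case: (pc_mono Hpo (Hpc f) hxz hxy) => z' [hz' hle].
exists y0, z'; split => //; split => //.
by exists (u ++ [:: f]); rewrite run_cat hu /= hz'.
Qed.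

Lemma clcover_tclosed (s0 : st T) : tclosed (cl (@le T) (cover s0)).
Proof.
apply: cl_tclosed => f x y hx hy; apply: sub_cl.
exact: cover_tclosed hx hy.
Qed.

Lemma cover_s0 (s0 : st T) : cover s0 s0.
Proof. by exists s0, s0; split; [apply: (lrefl Hpo)|split; [exists [::]|apply: (lrefl Hpo)]]. Qed.

Lemma accel_closed C (w : seq (lab T)) x y : scott_closed (@le T) C -> tclosed C -> C x ->
  accel w x y -> C y.
Proof.
move=> hC htc hx [gx [hg [[[hlt _] hl]|[_ ->]]]]; last exact: (tclosed_run htc hx hg).
apply: (closed_lub hC (iset_dir hg hlt) hl) => z [n hz].
by apply: (tclosed_run htc hx (_ : run (flatten (nseq n w)) x = Some z)); rewrite -iterp_run.
Qed.

Lemma accel_ge w (x y gx : st T) : run w x = Some gx -> accel w x y -> le gx y.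
Proof.
move=> hg [gx' [hg' [[_ hl]|[_ ->]]]]; rewrite hg in hg'; case: hg' => ?; subst gx'.
  by apply: (lub_ub hl); exists 1; rewrite /= hg.
exact: (lrefl Hpo).
Qed.

End TSGen.

Lemma choice_fun (A B : Type) (R : A -> B -> Prop) :
  (forall a, exists b, R a b) -> exists f : A -> B, forall a, R a (f a).
Proof.
move=> h; exists (fun a => proj1_sig (constructive_indefinite_description _ (h a))).
by move=> a; case: (constructive_indefinite_description _ (h a)).
Qed.

Lemma incr_mono (e : nat -> nat) : (forall n, e n < e n.+1) ->
  forall n m, n < m -> e n < e m.
Proof.
move=> he n m; elim: m => [|m IH] //; rewrite ltnS leq_eqVlt => /orP[/eqP->|h] //.
exact: ltn_trans (IH h) (he m).
Qed.

Lemma enum_inf (P : nat -> Prop) : (forall n, exists i, n <= i /\ P i) ->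
  exists e : nat -> nat, (forall n, e n < e n.+1) /\ (forall n, P (e n)).
Proof.
move=> h; case: (choice_fun h) => g hg.
pose e := fix e n := if n is n'.+1 then g (e n').+1 else g 0.
exists e; split => [n|[|n]] /=; [by case: (hg (e n).+1)| by case: (hg 0)|].
by case: (hg (e n).+1).
Qed.

Lemma wf_no_desc (S : Type) (R : S -> S -> Prop) : well_founded R ->
  forall y : nat -> S, ~ (forall n, R (y n.+1) (y n)).
Proof.
move=> hwf y hy.
suff H : forall a, Acc R a -> forall n, y n <> a by exact: (H _ (hwf (y 0)) 0).
move=> a; elim=> {}a _ IH n hn; apply: (IH (y n.+1)) => //.
by rewrite -hn.
Qed.

Section Wqo.
Variables (S : Type) (le : S -> S -> Prop).
Hypothesis Hpo : partial_order le.
Hypothesis Hw : wpo le.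

Lemma wqo_good (x : nat -> S) : exists i j, i < j /\ le (x i) (x j).
Proof.
apply: NNPP => hbad.
have bad : forall i j, i < j -> ~ le (x i) (x j).
  by move=> i j hij hle; apply: hbad; exists i, j.
case: Hw => hwf hanti.
case: (classic (forall n, exists i, n <= i /\ forall j, i < j -> ~ lt le (x j) (x i))) => hA.
- case: (enum_inf hA) => e [he hP]; apply: hanti; exists (fun k => x (e k)).
  move=> k l hkl; have : (k < l) || (l < k) by rewrite -neq_ltn; apply/eqP.
  case/orP => [hlt|hgt].
  + exact: bad (incr_mono he hlt).
  + move=> hle; apply: (hP l (e k) (incr_mono he hgt)); split => // heq.
    by apply: (bad _ _ (incr_mono he hgt)); rewrite heq; apply: (lrefl Hpo).
- have [n hn] : exists n, forall i, n <= i -> exists j, i < j /\ lt le (x j) (x i).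
    apply: NNPP => hno; apply: hA => n; apply: NNPP => h1; apply: hno; exists n => i hi.
    apply: NNPP => h2; apply: h1; exists i; split => // j hj hlt; apply: h2; by exists j.
  have : forall i, exists j, n <= i -> n <= j /\ lt le (x j) (x i).
    move=> i; case: (classic (n <= i)) => hi.
      case: (hn i hi) => j [hij hl]; exists j => _; split => //.
      exact: leq_trans hi (ltnW hij).
    by exists 0 => /hi.
  case/choice_fun => g hg.
  pose e := fix e k := if k is k'.+1 then g (e k') else n.
  have he : forall k, n <= e k by elim=> [|k IH] /=; [|case: (hg (e k) IH)].
  apply: (wf_no_desc hwf (y := fun k => x (e k))) => k /=.
  by case: (hg (e k) (he k)).
Qed.

End Wqo.

Lemma least_ex (P : nat -> Prop) n : P n -> exists k, P k /\ forall j, j < k -> ~ P j.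
Proof.
elim: n {-2}n (leqnn n) => [|n IH] k hk hP.
  by exists k; split => // j; rewrite (leqn0 k) in hk; rewrite (eqP hk).
case: (classic (exists j, j < k /\ P j)) => [[j [hj hPj]]|hno].
  by apply: (IH j) => //; rewrite -ltnS; apply: leq_trans hj hk.
by exists k; split => // j hj hPj; apply: hno; exists j.
Qed.

Lemma nseq_flat_add (L : Type) (g : seq L) n k :
  flatten (nseq (n + k) g) = flatten (nseq n g) ++ flatten (nseq k g).
Proof. by elim: n => //= n IH; rewrite IH catA. Qed.

Lemma nseq_flat_mul (L : Type) (g : seq L) p q :
  flatten (nseq (p * q) g) = flatten (nseq q (flatten (nseq p g))).
Proof. by elim: q => [|q IH]; rewrite ?muln0 //= mulnS nseq_flat_add IH. Qed.

Section Fair.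
Variable T : TS.
Hypothesis Hpo : partial_order (@le T).
Hypothesis Hpc : forall f, partial_continuous (@le T) (act f).
Hypothesis Hw : wpo (@le T).
Variables (s0 : st T) (w : nat -> seq (lab T)) (a b : nat -> st T).
Hypothesis Hfair : clover_fair_infinite_run s0 w a b.

Local Notation A := (clover_set s0 b).
Definition Dn m (x : st T) := exists y, A m y /\ le x y.

Lemma A_mono m m' x : m <= m' -> A m x -> A m' x.
Proof.
move=> hm [->|[k [hk ->]]]; first by left.
by right; exists k; split => //; apply: leq_trans hk hm.
Qed.

Lemma Dn_mono m m' x : m <= m' -> Dn m x -> Dn m' x.
Proof. by move=> hm [y [hy hle]]; exists y; split => //; apply: A_mono hy. Qed.

Lemma Dn_A m x : A m x -> Dn m x.
Proof. by move=> h; exists x; split => //; apply: (lrefl Hpo). Qed.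

Lemma Dn_down m x y : le x y -> Dn m y -> Dn m x.
Proof. by move=> hxy [z [hz hle]]; exists z; split => //; apply: (ltrans Hpo) hle. Qed.

Lemma fair_pick m (g : seq (lab T)) x gx : A m x -> run g x = Some gx ->
  exists m', A m'.+1 (b m') /\ accel g x (b m').
Proof.
move=> hx hg; case: Hfair => hrun hf.
case: (hf m g x hx); first by rewrite /dom hg.
move=> m' [_ [hw ha]]; exists m'; split; first by right; exists m'.
by case: (hrun m') => _ [_]; rewrite hw ha.
Qed.

Lemma single m (u : seq (lab T)) x y : A m x -> run u x = Some y -> exists m', Dn m' y.
Proof.
move=> hx hy; case: (fair_pick hx hy) => m' [hA hacc].
by exists m'.+1, (b m'); split => //; apply: accel_ge hy hacc.
Qed.

Lemma H1 m (g : seq (lab T)) x gx : A m x -> run g x = Some gx ->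
  exists m' c, A m' c /\
   ((lt (@le T) x gx /\ forall n z, run (flatten (nseq n g)) x = Some z -> le z c) \/
    (~ lt (@le T) x gx /\ c = gx)).
Proof.
move=> hx hg; case: (fair_pick hx hg) => m' [hA [gx' [hg' hcase]]].
rewrite hg in hg'; case: hg' => ?; subst gx'.
exists m'.+1, (b m'); split => //; case: hcase => [[hlt hl]|[hn ->]]; [left|by right].
split => // n z hz; apply: (lub_ub hl); exists n; by rewrite iterp_run.
Qed.

Lemma fin_max (P : nat -> nat -> Prop) N :
  (forall i m m', m <= m' -> P i m -> P i m') ->
  (forall i, i < N -> exists m, P i m) -> exists m, forall i, i < N -> P i m.
Proof.
move=> hmono; elim: N => [|N IH] h; first by exists 0.
case: IH => [i hi|m hm]; first by apply: h; apply: ltnW.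
case: (h N (ltnSn N)) => m' hm'.
exists (maxn m m') => i; rewrite ltnS leq_eqVlt => /orP[/eqP->|hi].
  by apply: (hmono _ m'); rewrite ?leq_maxr.
by apply: (hmono _ m); rewrite ?leq_maxl //; apply: hm.
Qed.

Definition elem (i : nat) := if i is k.+1 then b k else s0.

Lemma A_elem m x : A m x -> exists i, i < m.+1 /\ x = elem i.
Proof. by case=> [->|[k [hk ->]]]; [exists 0|exists k.+1]. Qed.

Lemma elem_A m i : i < m.+1 -> A m (elem i).
Proof. by case: i => [|k] /= h; [left|right; exists k]. Qed.

Lemma fin_A (P : st T -> nat -> Prop) m0 :
  (forall x m m', m <= m' -> P x m -> P x m') ->
  (forall x, A m0 x -> exists m, P x m) -> exists m, forall x, A m0 x -> P x m.
Proof.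
move=> hmono h.
case: (@fin_max (fun i m => P (elem i) m) m0.+1) => [i m m'|i hi|m hm].
- exact: hmono.
- exact: h (elem_A hi).
by exists m => x /A_elem [i [hi ->]]; apply: hm.
Qed.

Definition DnP (Z : st T -> Prop) m := forall z, Z z -> Dn m z.
Lemma DnP_mono Z m m' : m <= m' -> DnP Z m -> DnP Z m'.
Proof. by move=> hm h z hz; apply: Dn_mono hm (h z hz). Qed.


Lemma Xsucc (g : seq (lab T)) n x :
  run (flatten (nseq n.+1 g)) x =
  match run (flatten (nseq n g)) x with Some y => run g y | None => None end.
Proof. by rewrite -addn1 nseq_flat_add run_cat /= cats0. Qed.

Lemma Xadd (g : seq (lab T)) n k x :
  run (flatten (nseq (n + k) g)) x =
  match run (flatten (nseq n g)) x with Some y => run (flatten (nseq k g)) y | None => None end.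
Proof. by rewrite nseq_flat_add run_cat. Qed.

Lemma init_cover m0 (g : seq (lab T)) x N : A m0 x ->
  exists M, forall n z, n < N -> run (flatten (nseq n g)) x = Some z -> Dn M z.
Proof.
move=> hx.
case: (@fin_max (fun n M => forall z, run (flatten (nseq n g)) x = Some z -> Dn M z) N).
- by move=> i m m' hm h z hz; apply: Dn_mono hm (h z hz).
- move=> n _; case E: (run (flatten (nseq n g)) x) => [z|].
    case: (single hx E) => m' hm'; exists m' => z' [<-] //.
  by exists 0.
by move=> M hM; exists M => n z hn; apply: hM.
Qed.

Lemma lt_of_le_neq (x y : st T) : le x y -> ~ lt (@le T) x y -> x = y.
Proof. by move=> hle hn; apply: NNPP => hne; apply: hn. Qed.

Lemma H0 m0 (g : seq (lab T)) x : A m0 x ->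
  exists M, forall n z, run (flatten (nseq n g)) x = Some z -> Dn M z.
Proof.
move=> hx.
pose X n := run (flatten (nseq n g)) x.
pose Q k := exists z, X k = Some z /\ (X k.+1 = None \/ exists z', X k.+1 = Some z' /\ lt (@le T) z z').
have Inv : forall k, (forall j, j < k -> ~ Q j) -> forall z, X k = Some z -> exists m, A m z.
  elim=> [|k IH] hk z.
    by rewrite /X /= => -[<-]; exists m0.
  rewrite /X Xsucc -/(X k); case E: (X k) => [y|] // hyz.
  case: (IH (fun j hj => hk j (ltnW hj)) y E) => m hy.
  have hnlt : ~ lt (@le T) y z.
    move=> hlt; apply: (hk k (ltnSn k)); exists y; split => //; right; exists z; split => //.
    by rewrite /X Xsucc -/(X k) E.
  case: (H1 hy hyz) => m' [c [hc [[hlt _]|[_ hcz]]]]; first by case: hnlt.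
  by exists m'; rewrite -hcz.
case: (classic (exists k, Q k)) => [[k0 hk0]|hnQ].
- case: (least_ex hk0) => k [[zk [hzk hcase]] hmin].
  case: (Inv k hmin zk hzk) => mk hAk.
  case: (init_cover g k.+1 hx) => M0 hM0.
  case: hcase => [hnone|[z' [hz' hlt]]].
  + exists M0 => n z hz; apply: (hM0 n) => //.
    case: (leqP n k) => // hkn; exfalso.
    have : X n = None.
      rewrite -(subnKC hkn) /X Xadd -/(X k.+1); by rewrite hnone.
    by rewrite /X hz.
  + have hgz : run g zk = Some z' by move: hz'; rewrite /X Xsucc -/(X k) hzk.
    case: (H1 hAk hgz) => m' [c [hc [[_ hbound]|[hn _]]]]; last by case: hn.
    exists (maxn M0 m') => n z hz.
    case: (ltnP n k.+1) => hn.
      by apply: (Dn_mono (leq_maxl _ _)); apply: hM0 hz.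
    have hkn : k <= n by apply: ltnW.
    have : run (flatten (nseq (n - k) g)) zk = Some z.
      by move: hz; rewrite -{1}(subnKC hkn) Xadd -/(X k) hzk.
    move/hbound => hle; apply: (Dn_mono (leq_maxr _ _)).
    by exists c; split.
- have hnq : forall k, ~ Q k by move=> k hk; apply: hnQ; exists k.
  have hdef : forall k, exists z, X k = Some z.
    elim=> [|k [z hz]]; first by exists x.
    case E: (X k.+1) => [z'|]; first by exists z'.
    by case: (hnq k); exists z; split => //; left.
  case: (choice_fun hdef) => xs hxs.
  have hA : forall k, exists m, A m (xs k).
    by move=> k; apply: (Inv k (fun j _ => hnq j)).
  case: (wqo_good Hpo Hw xs) => i [j [hij hle]].
  pose p := j - i.
  have hp : 0 < p by rewrite /p subn_gt0.
  pose h := flatten (nseq p g).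
  have hjr : forall r, j + r = i + r + p by move=> r; rewrite /p addnAC subnKC // ltnW.
  have hxs' : forall k, run (flatten (nseq k g)) x = Some (xs k) := hxs.
  have hrun : forall r, run h (xs (i + r)) = Some (xs (j + r)).
    move=> r; have e := hxs' (i + r + p).
    by rewrite Xadd hxs' -hjr in e.
  have hmono : forall r, le (xs (i + r)) (xs (j + r)).
    move=> r; have e1 := hxs' (i + r); have e2 := hxs' (j + r).
    rewrite Xadd hxs' in e1; rewrite Xadd hxs' in e2.
    case: (run_mono Hpo Hpc hle e1) => y' [hy' hle'].
    by rewrite hy' in e2; case: e2 => <-.
  have htail : forall r, r < p -> exists m, forall q z,
      run (flatten (nseq q h)) (xs (i + r)) = Some z -> Dn m z.
    move=> r _; case: (hA (i + r)) => m hm.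
    case: (H1 hm (hrun r)) => m' [c [hc [[_ hb]|[hn hcz]]]].
      by exists m'; move=> q z hz; exists c; split => //; apply: hb hz.
    have heq := lt_of_le_neq (hmono r) hn.
    have hfix : forall q, run (flatten (nseq q h)) (xs (i + r)) = Some (xs (i + r)).
      elim=> [|q IH] //; rewrite Xsucc IH hrun; by rewrite -heq.
    by exists m; move=> q z; rewrite hfix => -[<-]; apply: Dn_A.
  case: (@fin_max (fun r m => forall q z,
      run (flatten (nseq q h)) (xs (i + r)) = Some z -> Dn m z) p).
  + by move=> r m m' hmm h' q z hz; apply: Dn_mono hmm (h' q z hz).
  + exact: htail.
  move=> M1 hM1.
  case: (init_cover g i hx) => M0 hM0.
  exists (maxn M0 M1) => n z hz.
  case: (ltnP n i) => hn.
    by apply: (Dn_mono (leq_maxl _ _)); apply: hM0 hz.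
  apply: (Dn_mono (leq_maxr _ _)).
  pose r := (n - i) %% p; pose q := (n - i) %/ p.
  have hn' : n = i + r + p * q.
    by rewrite /r /q -addnA (addnC ((n - i) %% p)) mulnC -divn_eq subnKC.
  apply: (hM1 r (ltn_pmod _ hp) q).
  by move: hz; rewrite hn' Xadd hxs' nseq_flat_mul.
Qed.

Lemma HA m0 (g : seq (lab T)) :
  exists M, forall x, A m0 x -> forall n z, run (flatten (nseq n g)) x = Some z -> Dn M z.
Proof.
apply: (@fin_A (fun x M => forall n z, run (flatten (nseq n g)) x = Some z -> Dn M z)).
  by move=> x m m' hm h n z hz; apply: Dn_mono hm (h n z hz).
by move=> x hx; apply: H0 hx.
Qed.

Lemma HP m0 (W : seq (lab T)) :
  exists M, forall x, A m0 x -> forall j z, j < size W -> run (take j W) x = Some z -> Dn M z.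
Proof.
apply: (@fin_A (fun x M => forall j z, j < size W -> run (take j W) x = Some z -> Dn M z)).
  by move=> x m m' hm h j z hj hz; apply: Dn_mono hm (h j z hj hz).
move=> x hx.
case: (@fin_max (fun j M => forall z, run (take j W) x = Some z -> Dn M z) (size W)).
- by move=> i m m' hm h z hz; apply: Dn_mono hm (h z hz).
- move=> j _; case E: (run (take j W) x) => [z|]; last by exists 0.
  by case: (single hx E) => m' hm'; exists m' => z' [<-].
by move=> M hM; exists M => j z hj; apply: hM.
Qed.

End Fair.

Lemma pfx_decomp (L : Type) (W u v u2 : seq L) n :
  u ++ v = flatten (nseq n W) ++ u2 ->
  (exists u', u = flatten (nseq n W) ++ u' /\ u' ++ v = u2) \/
  (exists n' j, j < size W /\ u = flatten (nseq n' W) ++ take j W).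
Proof.
elim: n u => [|n IH] u /= huv; first by left; exists u.
rewrite -catA in huv.
case: (ltnP (size u) (size W)) => hs.
  right; exists 0, (size u); split => //=.
  have := congr1 (take (size u)) huv.
  by rewrite (take_size_cat (s1:=u) v erefl) (takel_cat (s1:=W)) // ltnW.
have hu : u = W ++ drop (size W) u.
  have := congr1 (take (size W)) huv.
  rewrite (takel_cat (s1:=u)) // (take_size_cat (s1:=W) _ erefl) => hW.
  by rewrite -{1}(cat_take_drop (size W) u) hW.
have huv' : drop (size W) u ++ v = flatten (nseq n W) ++ u2.
  move: huv; rewrite {1}hu -catA => huv.
  have := congr1 (drop (size W)) huv.
  by rewrite !(drop_size_cat (s1:=W) _ erefl).
case: (IH _ huv') => [[u' [h1 h2]]|[n' [j [hj h1]]]].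
  by left; exists u'; rewrite hu h1 catA.
by right; exists n'.+1, j; split => //=; rewrite hu h1 catA.
Qed.

Section Fair2.
Variable T : TS.
Hypothesis Hpo : partial_order (@le T).
Hypothesis Hpc : forall f, partial_continuous (@le T) (act f).
Hypothesis Hw : wpo (@le T).
Variables (s0 : st T) (w : nat -> seq (lab T)) (a b : nat -> st T).
Hypothesis Hfair : clover_fair_infinite_run s0 w a b.
Local Notation A := (clover_set s0 b).
Local Notation Dn := (Dn s0 b).


Lemma G (ws : seq (seq (lab T))) : forall m0, exists M, forall x, A m0 x ->
  forall u v z, in_lang ws (u ++ v) -> run u x = Some z -> Dn M z.
Proof.
elim: ws => [|W ws IH] m0.
  exists m0 => x hx u v z /= huv; have -> : u = [::] by case: u huv.
  by move=> [<-]; exists x; split => //; apply: (lrefl Hpo).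
case: (HA Hpo Hpc Hw Hfair m0 W) => M1 hM1.
case: (IH M1) => M2 hM2.
case: (HP Hpo Hfair M1 W) => M3 hM3.
exists (maxn M2 M3) => x hx u v z [n [u2 [huv hin]]] hz.
case: (pfx_decomp huv) => [[u' [h1 h2]]|[n' [j [hj h1]]]].
- move: hz; rewrite h1 run_cat; case E: (run _ x) => [y|] // hz.
  case: (hM1 x hx n y E) => y' [hy' hle].
  case: (run_mono Hpo Hpc hle hz) => z' [hz' hle'].
  apply: (Dn_mono (leq_maxl _ _)); apply: (Dn_down Hpo hle').
  by apply: (hM2 y' hy' u' v); rewrite ?h2.
- move: hz; rewrite h1 run_cat; case E: (run _ x) => [y|] // hz.
  case: (hM1 x hx n' y E) => y' [hy' hle].
  case: (run_mono Hpo Hpc hle hz) => z' [hz' hle'].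
  apply: (Dn_mono (leq_maxr _ _)); apply: (Dn_down Hpo hle').
  exact: hM3 hz'.
Qed.

Lemma A_in_cl m x : A m x -> cl (@le T) (cover s0) x.
Proof.
elim: m x => [|m IH] x.
  by case=> [->|[k []]] //; apply: sub_cl; apply: cover_s0.
case=> [->|[k [hk ->]]]; first by apply: sub_cl; apply: cover_s0.
move: hk; rewrite ltnS leq_eqVlt => /orP[/eqP->|hk]; last by apply: IH; right; exists k.
case: Hfair => hrun _; case: (hrun m) => _ [ha hacc].
have h1 := (IH _ ha). have h2 := (clcover_tclosed Hpo Hpc (s0:=s0)). have h3 := cl_closed (@le T) (cover s0). exact: (accel_closed Hpo Hpc h3 h2 h1 hacc).
Qed.

Lemma A_succ m y : A m.+1 y -> A m y \/ y = b m.
Proof.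
case=> [->|[k [hk ->]]]; first by left; left.
move: hk; rewrite ltnS leq_eqVlt => /orP[/eqP->|hk]; first by right.
by left; right; exists k.
Qed.

Lemma dir_bound m D : directed (@le T) D -> (forall d, D d -> Dn m d) ->
  exists y, A m y /\ forall d, D d -> le d y.
Proof.
elim: m D => [|m IH] D hD hDn.
  exists s0; split; first by left.
  by move=> d hd; case: (hDn d hd) => y [[->|[k []]] hle].
case: (classic (forall d, D d -> le d (b m))) => hall.
  by exists (b m); split => //; right; exists m.
have [d0 [hd0 hnd0]] : exists d0, D d0 /\ ~ le d0 (b m).
  apply: NNPP => hn; apply: hall => d hd; apply: NNPP => h; apply: hn.
  by exists d.
case: (IH (above (@le T) D d0)).
- exact: (above_dir Hpo hD hd0).
- move=> d [hd hd0d]; case: (hDn d hd) => y [hy hle].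
  case: (A_succ hy) => [hy'|hyb]; first by exists y.
  by case: hnd0; rewrite -hyb; apply: (ltrans Hpo) hd0d hle.
move=> y [hy hb]; exists y; split; first by apply: (A_mono (leqnSn m)).
move=> d hd; case: hD => _ hD.
case: (hD d d0 hd hd0) => e [he [hde hd0e]].
by apply: (ltrans Hpo) hde _; apply: hb.
Qed.

Lemma Dn_closed m : scott_closed (@le T) (Dn m).
Proof.
split.
- by move=> x y hx hxy hy; apply: hx; apply: (Dn_down Hpo hxy).
- move=> D l hD hl hnl; apply: NNPP => hno; apply: hnl.
  case: (@dir_bound m D hD) => [d hd|y [hy hb]].
    by apply: NNPP => hn; apply: hno; exists d.
  exists y; split => //; case: hl => _; apply => d hd; exact: hb.
Qed.

Lemma stop_contra M : (forall y, cl (@le T) (cover s0) y -> Dn M y) -> False.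
Proof.
move=> hM; case: Hfair => hrun _; case: (hrun M) => hns _; apply: hns.
move=> x [p [[a' [f [ha' hp]]] hle]].
have hp' : cl (@le T) (cover s0) p.
  exact: (clcover_tclosed Hpo Hpc (s0:=s0) (A_in_cl ha') hp).
exact: (Dn_down Hpo hle (hM p hp')).
Qed.

End Fair2.

Lemma image_dir (S1 S2 : Type) (le1 : S1 -> S1 -> Prop) (le2 : S2 -> S2 -> Prop) h D :
  (forall x y, le1 x y -> le2 (h x) (h y)) -> directed le1 D -> directed le2 (image h D).
Proof.
move=> hm [[d hd] hD]; split; first by exists (h d), d.
move=> x y [dx [hdx <-]] [dy [hdy <-]].
case: (hD dx dy hdx hdy) => z [hz [h1 h2]].
by exists (h z); split; [exists z|split; apply: hm].
Qed.

Lemma pre_closed (S1 S2 : Type) (le1 : S1 -> S1 -> Prop) (le2 : S2 -> S2 -> Prop) h C :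
  partial_order le2 ->
  scott_continuous le1 le2 h -> scott_closed le2 C -> scott_closed le1 (fun x => C (h x)).
Proof.
move=> hpo [hm hl] hC; split.
- move=> x y hx hxy hy; apply: hx; exact: (closed_down hC hy (hm _ _ hxy)).
- move=> D l hD hlD hnl.
  case: hC => _ hCo.
  case: (hCo _ _ (image_dir hm hD) (hl D l hD hlD) hnl) => z [[d [hd <-]] hn].
  by exists d.
Qed.

Lemma morph_run (T1 T2 : TS) (hs : st T1 -> st T2) hl : ts_morphism hs hl ->
  forall u x y, run u x = Some y -> run (map hl u) (hs x) = Some (hs y).
Proof.
move=> hmor; elim=> [|f u IH] x y /=; first by case=> ->.
case E: (act f x) => [x'|] // hr.
by rewrite (hmor _ _ _ E); apply: IH.
Qed.

Lemma map_flat_nseq (A B : Type) (h : A -> B) (W : seq A) n :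
  map h (flatten (nseq n W)) = flatten (nseq n (map h W)).
Proof. by elim: n => //= n IH; rewrite map_cat IH. Qed.

Lemma in_lang_map (A B : Type) (h : A -> B) ws u :
  in_lang ws u -> in_lang (map (map h) ws) (map h u).
Proof.
elim: ws u => [|W ws IH] u /=; first by move=> ->.
move=> [n [u2 [-> hin]]]; exists n, (map h u2); split; last exact: IH.
by rewrite map_cat map_flat_nseq.
Qed.

Theorem weak_term (T : TS) (s0 : st T) :
  complete_ts T -> weakly_clover_flattable s0 -> clover_terminates s0.
Proof.
move=> [Hpo [_ [Hw Hpc]]] [T1 [hs [hl [s1 [[Hpo1 [_ [_ Hpc1]]] [[ws hflat] [hmor [hcont [hle hsub]]]]]]]]].
move=> [w [a [b Hfair]]].
case: (G Hpo Hpc Hw Hfair (map (map hl) ws) 0) => M hM.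
apply: (stop_contra Hpo Hpc Hfair (M := M)) => y hy.
have := hsub y hy; apply: cl_min; first exact: (Dn_closed Hpo s0 b M).
move=> z [x1 [hx1 <-]].
have hP : scott_closed (@le T1) (fun x => Dn s0 b M (hs x)).
  exact: (pre_closed Hpo hcont (Dn_closed Hpo s0 b M)).
apply: (cl_min hP _ hx1) => x [y1 [z1 [hy1 [[u hu] hxz]]]].
case: (run_mono Hpo1 Hpc1 hy1 hu) => z1' [hu' hz1'].
have hin := hflat u (_ : run u s1 <> None).
have hr := morph_run hmor hu'.
case: (run_mono Hpo Hpc hle hr) => z'' [hr'' hz''].
have hD : Dn s0 b M z''.
  apply: (hM s0 (or_introl erefl) (map hl u) [::]) => //.
  by rewrite cats0; apply: in_lang_map; apply: hflat; rewrite hu'.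
case: hcont => hmono _.
apply: (Dn_down Hpo _ hD).
apply: (ltrans Hpo (hmono _ _ hxz)).
exact: (ltrans Hpo (hmono _ _ hz1')).
Qed.

Lemma pigeon (Q : finType) (c : nat -> Q) : exists q, forall n, exists i, n <= i /\ c i = q.
Proof.
apply: NNPP => hno.
have : forall q, exists N, forall i, N <= i -> c i <> q.
  move=> q; apply: NNPP => h1; apply: hno; exists q => n; apply: NNPP => h2; apply: h1.
  by exists n => i hi hci; apply: h2; exists i.
case/choice_fun => N hN.
pose M := \max_(q : Q) N q.
by apply: (hN (c M) M) => //; rewrite /M (bigmax_sup (c M)).
Qed.

Section Prod.
Variables (T : TS) (Q : finType) (delta : Q -> lab T -> option Q).
Hypothesis Hc : complete_ts T.
Local Notation P := (sync_product delta).

Let Hpo : partial_order (@le T). Proof. by case: Hc. Qed.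
Let Hpc : forall f, partial_continuous (@le T) (act f). Proof. by case: Hc => _ [_ []]. Qed.

Lemma prod_po : partial_order (@le P).
Proof.
split; first by move=> [x q]; split => //; apply: (lrefl Hpo).
split.
  move=> [x q] [y r] [/= h1 ->] [/= h2 _].
  by rewrite (lanti Hpo h1 h2).
move=> [x q] [y r] [z t] [/= h1 ->] [/= h2 ->]; split => //.
exact: (ltrans Hpo h1 h2).
Qed.

Lemma dir_q (D : st P -> Prop) : directed (@le P) D ->
  exists q, forall d, D d -> d.2 = q.
Proof.
move=> [[d0 hd0] hD]; exists d0.2 => d hd.
by case: (hD d d0 hd hd0) => z [_ [[_ ->] [_ ->]]].
Qed.

Lemma dir_fst (D : st P -> Prop) : directed (@le P) D -> directed (@le T) (image fst D).
Proof. by apply: image_dir => x y []. Qed.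

Lemma lub_fst (D : st P -> Prop) l : directed (@le P) D -> is_lub (@le P) D l ->
  is_lub (@le T) (image fst D) l.1.
Proof.
move=> hD [hub hleast]; split.
  by move=> y [d [hd <-]]; case: (hub d hd).
move=> u hu.
case: (dir_q hD) => q hq.
case: (hD) => [[d0 hd0] _].
have hl2 : l.2 = q by case: (hub d0 hd0) => _ <-; apply: hq.
have : le l (u, q) :> Prop.
  apply: hleast => d hd; split => /=; first by apply: hu; exists d.
  exact: hq.
by case.
Qed.

Lemma lub_mk (D : st P -> Prop) l q : (exists d, D d) -> (forall d, D d -> d.2 = q) ->
  is_lub (@le T) (image fst D) l -> is_lub (@le P) D (l, q).
Proof.
move=> [d0 hd0] hq [hub hleast]; split.
  by move=> d hd; split => /=; [apply: hub; exists d | apply: hq].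
move=> [u r] hu; split => /=.
  by apply: hleast => y [d [hd <-]]; case: (hu d hd).
by case: (hu d0 hd0) => _ /= <-; rewrite (hq d0 hd0).
Qed.

Lemma prod_dcpo : dcpo (@le P).
Proof.
move=> D hD; case: (dir_q hD) => q hq.
case: Hc => _ [[hdc _] _].
case: (hdc _ (dir_fst hD)) => l hl.
by exists (l, q); apply: lub_mk => //; case: hD.
Qed.

Definition lift_q (D : st T -> Prop) (q : Q) : st P -> Prop :=
  fun p => D p.1 /\ p.2 = q.

Lemma lift_dir D q : directed (@le T) D -> directed (@le P) (lift_q D q).
Proof.
move=> [[d hd] hD]; split; first by exists (d, q).
move=> [x r] [y t] [/= hx ->] [/= hy ->].
case: (hD x y hx hy) => z [hz [h1 h2]].
by exists (z, q).
Qed.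

Lemma lift_lub D q l : directed (@le T) D -> is_lub (@le T) D l -> is_lub (@le P) (lift_q D q) (l, q).
Proof.
move=> [[d hd] _] [hub hleast]; apply: lub_mk; first by exists (d, q).
  by move=> p [].
split; first by move=> y [p [[hp _] <-]]; apply: hub.
move=> u hu; apply: hleast => y hy; apply: hu; by exists (y, q).
Qed.

Lemma wb_prod (y : st P) s q :
  way_below (@le P) y (s, q) <-> (y.2 = q /\ way_below (@le T) y.1 s).
Proof.
split.
- move=> hwb; split.
    have hd := dir_pair prod_po (lrefl prod_po (s, q)).
    have hl := lub_pair prod_po (lrefl prod_po (s, q)).
    case: (hwb _ _ hd hl (lrefl prod_po _)) => z [hz [_ ->]].
    by case: hz => ->.
  move=> D l hD hl hsl.
  case: (hwb _ _ (lift_dir q hD) (lift_lub q hD hl)) => [|[z r] [[hz /= ->] [hle _]]].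
    by split.
  by exists z.
- move=> [hq hwb] D l hD hl [hsl hl2].
  case: (dir_q hD) => r hr.
  have hlf := lub_fst hD hl.
  case: (hwb _ _ (dir_fst hD) hlf hsl) => z [[d [hd <-]] hle].
  exists d; split => //; split => //.
  have hlr : l.2 = r.
    case: hD => [[d0 hd0] _]; case: hl => hub _.
    by case: (hub d0 hd0) => _ <-; apply: hr.
  by rewrite hq (hr d hd) -hlr -hl2.
Qed.

Lemma prod_cont : continuous_dcpo (@le P).
Proof.
split; first exact: prod_dcpo.
move=> [s q]; case: Hc => _ [[_ hcont] _]; case: (hcont s) => hdir hlub.
have heq : forall y, way_below (@le P) y (s, q) <-> lift_q (fun t => way_below (@le T) t s) q y.
  by move=> y; rewrite wb_prod; split => -[].
split.
- case: hdir => [[t ht] hdir]; split; first by exists (t, q); apply/heq.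
  move=> x y /heq [hx hxq] /heq [hy hyq].
  case: (hdir _ _ hx hy) => z [hz [h1 h2]].
  exists (z, q); split; first by apply/heq.
  by split; split.
- have hl := lift_lub q hdir hlub.
  case: hl => hub hleast; split.
    by move=> y /heq; apply: hub.
  by move=> u hu; apply: hleast => y /heq; apply: hu.
Qed.

Lemma prod_wpo : wpo (@le P).
Proof.
case: Hc => _ [_ [[hwf hanti] _]]; split.
  apply: (wf_incl _ _ _ _ (wf_inverse_image _ _ (lt (@le T)) fst hwf)).
  move=> x y [[h1 h2] hne]; split => // heq; apply: hne.
  by case: x y h2 heq {h1} => [x q] [y r] /= -> ->.
move=> [c hc].
case: (pigeon (fun n => (c n).2)) => q hq.
case: (enum_inf hq) => e [he hEq].
apply: hanti; exists (fun k => (c (e k)).1) => k l hkl hle.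
have hne : e k <> e l.
  move=> heq; apply: hkl.
  case: (ltngtP k l) => // h.
    by have := incr_mono he h; rewrite heq ltnn.
  by have := incr_mono he h; rewrite heq ltnn.
apply: (hc _ _ hne); split => //.
by rewrite (hEq k) (hEq l).
Qed.

Lemma prod_act_eq (f : lab P) (p : st P) :
  act f p = match act (val f) p.1, delta p.2 (val f) with
            | Some s', Some q' => Some (s', q') | _, _ => None end.
Proof. by []. Qed.

Lemma prod_act_fst (f : lab P) p p' : act f p = Some p' -> act (val f) p.1 = Some p'.1.
Proof.
by rewrite prod_act_eq; case: (act (val f) p.1) => [s'|] //; case: (delta _ _) => [q'|] // [<-].
Qed.



Lemma prod_pc f : partial_continuous (@le P) (act f).
Proof.
have hdom : forall p, dom (act f) p <-> dom (act (val f)) p.1 /\ delta p.2 (val f) <> None.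
  move=> [x q]; rewrite /dom prod_act_eq /=.
  by case: (act (val f) x) => [s'|]; case: (delta q (val f)) => [q'|]; split; intuition congruence.
case: (Hpc (val f)) => [[hup ho] hc].
split; first split.
- move=> x y /hdom [h1 h2] [hxy hq]; apply/hdom; split; first by apply: hup h1 hxy.
  by rewrite -hq.
- move=> D l hD hl /hdom [h1 h2].
  case: (dir_q hD) => q hq.
  case: (ho _ _ (dir_fst hD) (lub_fst hD hl) h1) => _ [[d [hd <-]] hdd].
  exists d; split => //; apply/hdom; split => //.
  rewrite (hq d hd).
  case: hD => [[d0 hd0] _]; case: hl => hub _.
  by case: (hub d0 hd0) => _ hdl; rewrite -(hq d0 hd0) hdl.
- move=> D l hD hdD hl.
  case: (dir_q hD) => q hq.
  have hl2 : l.2 = q.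
    case: hD => [[d0 hd0] _]; case: hl => hub _.
    by case: (hub d0 hd0) => _ <-; apply: hq.
  have hdD1 : forall d, image fst D d -> dom (act (val f)) d.
    by move=> _ [d [hd <-]]; case/hdom: (hdD d hd).
  case: (hc _ _ (dir_fst hD) hdD1 (lub_fst hD hl)) => y [hy hly].
  case: hD => [[d0 hd0] _].
  have : delta q (val f) <> None by case/hdom: (hdD d0 hd0) => _; rewrite hq.
  case Eq: (delta q (val f)) => [q'|] // _.
  exists (y, q'); split; first by rewrite prod_act_eq hy hl2 Eq.
  apply: lub_mk.
  + move: (hdD d0 hd0); rewrite /dom; case E: (act f d0) => [z|] // _; by exists z, d0.
  + move=> z [d [hd]]; rewrite prod_act_eq (hq d hd) Eq.
    by case: (act (val f) d.1) => [s'|] // [<-].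
  + split.
      move=> z [p [[d [hd hp]] <-]]; apply: (lub_ub hly); exists d.1; split; first by exists d.
      by move: hp; rewrite prod_act_eq (hq d hd) Eq; case: (act (val f) d.1) => [s'|] // [<-].
    move=> u hu; case: hly => _; apply=> z [d1 [[d [hd <-]] hz]].
    apply: hu; exists (z, q'); split => //; exists d; split => //.
    by rewrite prod_act_eq hz (hq d hd) Eq.
Qed.

Lemma prod_complete : complete_ts P.
Proof.
split; first exact: prod_po.
split; first exact: prod_cont.
split; first exact: prod_wpo.
exact: prod_pc.
Qed.

End Prod.

Section Lang.
Variable L : Type.

Lemma in_lang_nil (ws : seq (seq L)) : in_lang ws [::].
Proof. by elim: ws => //= W ws IH; exists 0, [::]. Qed.

Lemma in_lang_cat (ws1 ws2 : seq (seq L)) u1 u2 :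
  in_lang ws1 u1 -> in_lang ws2 u2 -> in_lang (ws1 ++ ws2) (u1 ++ u2).
Proof.
elim: ws1 u1 => [|W ws IH] u1 /=; first by move=> ->.
move=> [n [u' [-> h]]] h2; exists n, (u' ++ u2); split; first by rewrite catA.
exact: IH.
Qed.

Lemma in_lang_pow (W : seq L) ws n u : in_lang ws u -> in_lang (W :: ws) (flatten (nseq n W) ++ u).
Proof. by move=> h; exists n, u. Qed.

Lemma in_lang_skip (W : seq L) ws u : in_lang ws u -> in_lang (W :: ws) u.
Proof. by move=> h; exists 0, u. Qed.

Lemma in_lang_pre (ws1 ws2 : seq (seq L)) u : in_lang ws2 u -> in_lang (ws1 ++ ws2) u.
Proof. by move=> h; rewrite -[u]cat0s; apply: in_lang_cat => //; apply: in_lang_nil. Qed.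

End Lang.

Section LangEq.
Variable L : eqType.

Lemma in_lang_mem (ws : seq (seq L)) x : x \in ws -> in_lang ws x.
Proof.
elim: ws => [|W ws IH] //; rewrite inE => /orP[/eqP->|h].
  by exists 1, [::]; rewrite /= cats0 cats0; split => //; apply: in_lang_nil.
by apply: in_lang_skip; apply: IH.
Qed.

Definition pfx_ws (ws : seq (seq L)) : seq (seq L) :=
  flatten [seq W :: [seq take j W | j <- iota 0 (size W)] | W <- ws].

Lemma pfx_ws_cons W ws : pfx_ws (W :: ws) = W :: ([seq take j W | j <- iota 0 (size W)] ++ pfx_ws ws).
Proof. by []. Qed.

Lemma in_lang_pfx (ws : seq (seq L)) u v : in_lang ws (u ++ v) -> in_lang (pfx_ws ws) u.
Proof.
elim: ws u v => [|W ws IH] u v.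
  by case: u.
move=> [n [u2 [huv hin]]]; rewrite pfx_ws_cons.
case: (pfx_decomp huv) => [[u' [h1 h2]]|[n' [j [hj h1]]]].
  rewrite h1; apply: in_lang_pow; apply: in_lang_pre; apply: (IH u' v); by rewrite h2.
rewrite h1; apply: in_lang_pow; rewrite -[take j W]cats0; apply: in_lang_cat.
  by apply: in_lang_mem; apply: map_f; rewrite mem_iota.
exact: in_lang_nil.
Qed.

End LangEq.

Section SubLang.
Variables (L : eqType) (p : pred L) (sT : subType p).

Lemma map_val_pmap (W : seq L) : all p W -> map val (pmap insub W : seq sT) = W.
Proof.
elim: W => [|x W IH] // hall.
have /andP[hx hW] := hall.
have e : (insub x : option sT) = Some (Sub x hx) by rewrite insubT.
by rewrite /= e /= SubK IH.
Qed.

Lemma mem_map_val (u : seq sT) x : x \in map val u -> p x.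
Proof.
elim: u => [|y u IH] //=; rewrite inE => /orP[/eqP->|h]; [exact: valP|exact: IH].
Qed.

Lemma in_lang_val (ws : seq (seq L)) (u : seq sT) :
  in_lang ws (map val u) -> in_lang (map (pmap insub) ws) u.
Proof.
elim: ws u => [|W ws IH] u /=.
  by case: u.
move=> [n [x2 [hu hin]]].
case: n hu => [|n] hu; first by exists 0, u; split => //; apply: IH; rewrite hu.
have hW : all p W.
  apply/allP => x hx; have : x \in map val u by rewrite hu /= !mem_cat hx.
  by move/mem_map_val.
pose W' : seq sT := pmap insub W.
pose k := size (flatten (nseq n.+1 W)).
have htk : map val (take k u) = map val (flatten (nseq n.+1 W')).
  by rewrite map_take hu (take_size_cat _ erefl) map_flat_nseq map_val_pmap.
have hdk : map val (drop k u) = x2.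
  by rewrite map_drop hu (drop_size_cat _ erefl).
exists n.+1, (drop k u); split; last by apply: IH; rewrite hdk.
by rewrite -(inj_map val_inj htk) cat_take_drop.
Qed.

End SubLang.

Section Strong.
Variables (T : TS) (s0 : st T).
Hypothesis Hc : complete_ts T.

Lemma prod_run_drun (Q : finType) (delta : Q -> lab T -> option Q) (u : seq (lab (sync_product delta))) p :
  run u p <> None -> drun delta (map val u) p.2 <> None.
Proof.
elim: u p => [|f u IH] [x q] //=.
case: (act (sval f) x) => [s'|]; case: (delta q (sval f)) => [q'|] //.
by move/(IH (s', q')).
Qed.

Theorem strong_clover : strongly_clover_flattable s0 -> clover_flattable s0.
Proof.
move=> [Q [delta [q0 [[ws hws] heq]]]].
exists (sync_product delta), fst, val, (s0, q0).
split; first exact: prod_complete.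
split.
  exists (map (pmap insub) (pfx_ws ws)) => u hu.
  apply: in_lang_val.
  have := prod_run_drun hu; rewrite -/(drun delta (map val u) q0) hws => -[v hv].
  exact: in_lang_pfx hv.
split; first by move=> f s s'; apply: prod_act_fst.
split; last by split.
split; first by move=> x y [].
by move=> D l hD hl; apply: lub_fst.
Qed.

Theorem clover_weak : clover_flattable s0 -> weakly_clover_flattable s0.
Proof.
move=> [T1 [hs [hl [s1 [h1 [h2 [h3 [h4 [h5 h6]]]]]]]]].
exists T1, hs, hl, s1; do 4 (split => //).
split; first by rewrite h5; case: Hc => Hpo _; apply: (lrefl Hpo).
by move=> x hx; apply/h6.
Qed.

End Strong.

Section LangLemmas.
Variable L : Type.

Lemma take_lang_ext (ws : seq (seq L)) i i' z : i <= i' ->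
  in_lang (take i ws) z -> in_lang (take i' ws) z.
Proof.
move=> hii h; rewrite -(cat_take_drop i (take i' ws)) -take_min (minn_idPl hii).
by rewrite -[z]cats0; apply: in_lang_cat => //; apply: in_lang_nil.
Qed.

Lemma take_lang_succ (ws : seq (seq L)) i z m : i < size ws ->
  in_lang (take i ws) z -> in_lang (take i.+1 ws) (z ++ flatten (nseq m (nth [::] ws i))).
Proof.
move=> hi h; rewrite (take_nth [::] hi) -cats1; apply: in_lang_cat => //.
by rewrite -[flatten _]cats0; apply: in_lang_pow.
Qed.

Lemma last_block (ws : seq (seq L)) z : in_lang ws z -> z <> [::] ->
  exists i0 m z0, i0 < size ws /\ nth [::] ws i0 <> [::] /\ in_lang (take i0 ws) z0 /\
    z = z0 ++ flatten (nseq m.+1 (nth [::] ws i0)).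
Proof.
elim: ws z => [|W ws IH] z /=; first by move=> ->.
move=> [n [z2 [-> hin]]] hz.
case: z2 hin hz => [|c z2] hin hz.
  rewrite cats0 in hz *.
  case: n hz => [|n] hz //.
  exists 0, n, [::]; split => //; split; first by move=> /= hW; apply: hz; rewrite hW; by elim: n.
  by split => //; apply: in_lang_nil.
case: (IH (c :: z2) hin) => // i0 [m [z0 [hi [hne [hz0 hzz]]]]].
exists i0.+1, m, (flatten (nseq n W) ++ z0); split => //; split => //.
by split; [exists n, z0 | rewrite hzz catA].
Qed.

Lemma dec_lang (ws : seq (seq L)) u v : in_lang ws (u ++ v) -> u <> [::] ->
  exists i j z n, i < size ws /\ j < size (nth [::] ws i) /\ in_lang (take i ws) z /\
    u = z ++ flatten (nseq n (nth [::] ws i)) ++ take j (nth [::] ws i).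
Proof.
elim: ws u => [|W ws IH] u /=; first by case: u.
move=> [n [u2 [huv hin]]] hu.
case: (pfx_decomp huv) => [[u' [h1 h2]]|[n' [j [hj h1]]]].
- case: u' h1 h2 => [|c u'] h1 h2.
    rewrite cats0 in h1.
    have hW : 0 < size W.
      case: W h1 {huv} => [|c0 W] h1 //; exfalso; apply: hu; rewrite h1; by elim: n {h1}.
    exists 0, 0, [::], n; split => //; split => //; split; first by apply: in_lang_nil.
    by rewrite h1 /= take0 cats0.
  case: (IH (c :: u')); [by rewrite h2|by []|].
  move=> i [j [z [m [hi [hj [hz hu']]]]]].
  exists i.+1, j, (flatten (nseq n W) ++ z), m; split => //; split => //.
  by split; [exists n, z | rewrite h1 hu' !catA].
- exists 0, j, [::], n'; split; [by []|split; [by []|split; [exact: in_lang_nil|by rewrite h1]]].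
Qed.

End LangLemmas.

Section DFA.
Variables (L : finType) (ws : seq (seq L)).

Definition Wd i := nth [::] ws i.
Definition KK := size ws.
Definition NN := \max_(W <- ws) size W.
Definition Pos := ('I_KK.+1 * 'I_NN.+1)%type.
Definition pn (p : Pos) : nat * nat := (nat_of_ord p.1, nat_of_ord p.2).
Definition valid (x : nat * nat) := (x.1 < KK) && (x.2 < size (Wd x.1)).

Definition stepb (x y : nat * nat) (f : L) : bool :=
  valid x && (nth f (Wd x.1) x.2 == f) &&
  (if x.2.+1 < size (Wd x.1) then y == (x.1, x.2.+1)
   else (x.1 <= y.1) && (y.2 == 0) && valid y).

Definition nextS (S : {set Pos}) (f : L) : {set Pos} :=
  [set y | [exists x in S, stepb (pn x) (pn y) f]].
Definition qinit : {set Pos} := [set y | (pn y).2 == 0 & valid (pn y)].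
Definition dl (S : {set Pos}) (f : L) : option {set Pos} :=
  if nextS S f == set0 then None else Some (nextS S f).
Definition reachS (S : {set Pos}) (u : seq L) := foldl nextS S u.

Lemma nextS0 f : nextS set0 f = set0.
Proof. by apply/setP => y; rewrite !inE; apply/existsP => -[x]; rewrite inE. Qed.

Lemma reach0 u : reachS set0 u = set0.
Proof. by elim: u => //= f u IH; rewrite nextS0. Qed.

Lemma drun_reach u S : drun dl u S <> None <-> (u = [::] \/ reachS S u != set0).
Proof.
elim: u S => [|f u IH] S /=; first by split => // _; left.
rewrite /dl; case: ifP => [/eqP->|hne].
  by rewrite reach0 eqxx; split => // -[].
rewrite IH; split => [[->|h]|[//|h]]; [right; by rewrite /= hne|by right|by right].
Qed.

Definition Inv (u : seq L) (x : nat * nat) :=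
  valid x /\ exists z n, in_lang (take x.1 ws) z /\
    u = z ++ flatten (nseq n (Wd x.1)) ++ take x.2 (Wd x.1).

Lemma Inv_block u i0 z0 m y : i0 < KK -> in_lang (take i0 ws) z0 ->
  u = z0 ++ flatten (nseq m.+1 (Wd i0)) -> i0 <= y.1 -> y.2 = 0 -> valid y -> Inv u y.
Proof.
move=> hi0 hz0 hu hy1 hy2 hv; split => //.
case: (ltngtP i0 y.1) hy1 => // [hlt|heq] _.
  exists u, 0; rewrite hy2 take0 /= cats0; split => //.
  apply: (take_lang_ext (i := i0.+1)) => //.
  by rewrite hu; apply: take_lang_succ.
exists z0, m.+1; rewrite -heq hy2 take0 cats0; split => //.
Qed.

Lemma step_inv p x y f : Inv p x -> stepb x y f -> Inv (p ++ [:: f]) y.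
Proof.
move=> [hv [z [n [hz ->]]]] /andP[/andP[_ /eqP hnth] hcase].
move: hv => /andP[hi hj].
case: ifP hcase => hlt.
  move/eqP=> ->; split; first by rewrite /valid /= hi.
  exists z, n; split => //=.
  by rewrite (take_nth f hj) hnth -!catA cats1.
move=> /andP[/andP[hy1 /eqP hy2] hvy].
have hs : size (Wd x.1) = x.2.+1.
  by apply/eqP; rewrite eqn_leq hj andbT leqNgt hlt.
apply: (Inv_block (i0 := x.1) (z0 := z) (m := n)) => //.
have ht : take x.2 (Wd x.1) ++ [:: f] = Wd x.1.
  by rewrite cats1 -hnth -(take_nth f hj) -hs take_size.
by rewrite -!catA ht -addn1 nseq_flat_add /= cats0 catA.
Qed.

Lemma sound_gen u : forall (S : {set Pos}) p, (forall y, y \in S -> Inv p (pn y)) ->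
  forall y, y \in reachS S u -> Inv (p ++ u) (pn y).
Proof.
elim: u => [|f u IH] S p hS y /=; first by rewrite cats0; apply: hS.
move=> hy; rewrite -cat1s catA; apply: (IH _ _ _ y hy) => y'.
rewrite inE => /existsP[x /andP[hx hst]].
exact: step_inv (hS x hx) hst.
Qed.

Lemma sound u y : y \in reachS qinit u -> Inv u (pn y).
Proof.
move=> hy; rewrite -[u]cat0s; apply: (sound_gen (S := qinit)) hy => x.
rewrite inE => /andP[/eqP h0 hv]; split => //.
exists [::], 0; split; first by apply: in_lang_nil.
by rewrite h0 take0.
Qed.

Lemma Wd_le i : i < KK -> size (Wd i) <= NN.
Proof. by move=> hi; apply: (bigmaxn_sup_seq (Wd i)) => //; apply: mem_nth. Qed.

Definition toPos (x : nat * nat) : Pos := (inord x.1, inord x.2).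

Lemma pn_toPos x : valid x -> pn (toPos x) = x.
Proof.
case: x => i j /andP[/= hi hj]; rewrite /pn /= !inordK //.
  by apply: leq_trans (Wd_le hi); apply: ltnW.
exact: ltnW.
Qed.

Lemma reach_rcons S u f : reachS S (rcons u f) = nextS (reachS S u) f.
Proof. by rewrite /reachS foldl_rcons. Qed.

Lemma in_next (S : {set Pos}) f x y : valid x -> valid y -> toPos x \in S -> stepb x y f ->
  toPos y \in nextS S f.
Proof.
move=> hx hy hS hst; rewrite inE; apply/existsP; exists (toPos x).
by rewrite hS /= !pn_toPos.
Qed.

Lemma block_complete u f i0 z0 m y :
  (forall x, Inv u x -> toPos x \in reachS qinit u) ->
  i0 < KK -> Wd i0 <> [::] -> in_lang (take i0 ws) z0 ->
  rcons u f = z0 ++ flatten (nseq m.+1 (Wd i0)) ->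
  valid y -> i0 <= y.1 -> y.2 = 0 -> toPos y \in reachS qinit (rcons u f).
Proof.
move=> IH hi0 hne hz0 hu hvy hy1 hy2.
have hs : 0 < size (Wd i0) by case: (Wd i0) hne.
have hsl : (size (Wd i0)).-1 < size (Wd i0) by rewrite prednK.
have hW : Wd i0 = rcons (take (size (Wd i0)).-1 (Wd i0)) (nth f (Wd i0) (size (Wd i0)).-1).
  by rewrite -take_nth // prednK // take_size.
have hu' : rcons u f = rcons (z0 ++ flatten (nseq m (Wd i0)) ++ take (size (Wd i0)).-1 (Wd i0))
                             (nth f (Wd i0) (size (Wd i0)).-1).
  by rewrite hu -addn1 nseq_flat_add /= cats0 {2}hW !rcons_cat.
have [e1 e2] := rcons_inj hu'.
have hvx : valid (i0, (size (Wd i0)).-1) by rewrite /valid /= hi0 hsl.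
rewrite reach_rcons; apply: (in_next hvx hvy (IH _ _)).
  split => //; exists z0, m; split => //.
rewrite /stepb hvx /= -e2 eqxx /= prednK // ltnn hy1 hy2 eqxx hvy.
by [].
Qed.

Lemma complete u x : Inv u x -> toPos x \in reachS qinit u.
Proof.
elim/last_ind: u x => [|u f IH] [i j] [hv [z [n [hz hu]]]].
  have hj0 : j = 0.
    have := congr1 size hu; rewrite !size_cat /= => /esym/eqP.
    rewrite !addn_eq0 => /andP[_ /andP[_ /eqP]].
    by rewrite size_takel //; case/andP: hv => _ /= /ltnW.
  by rewrite /reachS /= inE pn_toPos //= hj0 eqxx /=; rewrite -hj0.
move: hz hu hv => /= hz hu hv.
move: (hv) => /andP[/= hi hj].
case: j hj hv hu => [|j'] hj hv hu.
- rewrite take0 cats0 in hu.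
  case: n hu => [|m] hu.
    rewrite /= cats0 in hu.
    case: (last_block hz) => [|i0 [m [z0 [hi0 [hne [hz0 hzz]]]]]].
      by rewrite -hu; case: (u).
    rewrite size_take hi in hi0.
    rewrite nth_take // in hne hzz.
    have hz0' : in_lang (take i0 ws) z0 by rewrite -(minn_idPl (ltnW hi0)) take_min.
    apply: (block_complete (i0 := i0) (z0 := z0) (m := m)) => //.
    - exact: ltn_trans hi0 hi.
    - by rewrite hu.
    - exact: ltnW.
  by apply: (block_complete (i0 := i) (z0 := z) (m := m)) => //; case: (Wd i) hj.
- have hj' : j' < size (Wd i) by apply: ltnW.
  have hu' : rcons u f = rcons (z ++ flatten (nseq n (Wd i)) ++ take j' (Wd i)) (nth f (Wd i) j').
    by rewrite hu (take_nth f hj') !rcons_cat.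
  have [e1 e2] := rcons_inj hu'.
  have hvx : valid (i, j') by rewrite /valid /= hi hj'.
  rewrite reach_rcons; apply: (in_next hvx hv (IH _ _)).
    by split => //; exists z, n.
  by rewrite /stepb hvx /= -e2 eqxx /= hj eqxx.
Qed.

Theorem dfa_exists : exists (Q : finType) (delta : Q -> L -> option Q) (q0 : Q),
  rl_automaton delta q0 /\
  forall u, drun delta u q0 <> None <-> exists v, in_lang ws (u ++ v).
Proof.
have key : forall u, drun dl u qinit <> None <-> exists v, in_lang ws (u ++ v).
  move=> u; rewrite drun_reach; split.
    case=> [->|]; first by exists [::]; apply: in_lang_nil.
    case/set0Pn => y /sound [hv [z [n [hz hu]]]].
    exists (drop (pn y).2 (Wd (pn y).1)).
    case/andP: hv => hi hj.
    rewrite hu -!catA cat_take_drop.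
    rewrite -(cat_take_drop (pn y).1 ws) (drop_nth [::] hi).
    apply: in_lang_cat => //.
    have -> : flatten (nseq n (Wd (pn y).1)) ++ Wd (pn y).1 =
              flatten (nseq n.+1 (Wd (pn y).1)) ++ [::].
      by rewrite -addn1 nseq_flat_add /= !cats0.
    by apply: in_lang_pow; apply: in_lang_nil.
  case=> v hv; case: u hv => [|c u] hv; first by left.
  right; case: (dec_lang hv) => // i [j [z [n [hi [hj [hz hu]]]]]].
  apply/set0Pn; exists (toPos (i, j)); apply: complete.
  by split; [rewrite /valid /= hi hj|exists z, n].
exists {set Pos}, dl, qinit; split => //.
by exists ws.
Qed.

End DFA.

Lemma inj_unbounded (f : nat -> nat) : injective f -> forall m, exists r, m <= f r.
Proof.
move=> hf m; apply: NNPP => hno.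
have hlt : forall r, f r < m by move=> r; rewrite ltnNge; apply/negP => h; apply: hno; exists r.
pose g (r : 'I_m.+1) : 'I_m := Ordinal (hlt r).
have hg : injective g by move=> x y /(congr1 val) /= /hf /val_inj.
by have := leq_card g hg; rewrite !card_ord ltnn.
Qed.

Section Sched.
Variables (T : TS) (s0 : st T) (acc : seq (lab T) -> st T -> st T).
Hypothesis hacc : forall w x, dom (run w) x -> accel w x (acc w x).

Definition decT := (nat * seq (lab T) * nat)%type.

Definition choose (bs : seq (st T)) (n : nat) : seq (lab T) * st T :=
  match (unpickle n : option decT) with
  | Some (i, g, r) =>
      match excluded_middle_informative ((i <= n) /\ dom (run g) (nth s0 (s0 :: bs) i)) with
      | left _ => (g, nth s0 (s0 :: bs) i)
      | right _ => ([::], s0)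
      end
  | None => ([::], s0)
  end.

Fixpoint bl n := if n is n'.+1 then rcons (bl n') (acc (choose (bl n') n').1 (choose (bl n') n').2)
                 else [::].
Definition bb n := nth s0 (bl n.+1) n.
Definition ww n := (choose (bl n) n).1.
Definition aa n := (choose (bl n) n).2.

Lemma size_bl n : size (bl n) = n.
Proof. by elim: n => //= n IH; rewrite size_rcons IH. Qed.

Lemma bl_nth n k : k < n -> nth s0 (bl n) k = bb k.
Proof.
elim: n => // n IH; rewrite ltnS leq_eqVlt => /orP[/eqP->|hk] //.
by rewrite /= nth_rcons size_bl hk IH.
Qed.

Lemma bb_eq n : bb n = acc (ww n) (aa n).
Proof. by rewrite /bb /= nth_rcons size_bl ltnn eqxx. Qed.

Lemma choose_spec n : clover_set s0 bb n (aa n) /\ dom (run (ww n)) (aa n).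
Proof.
rewrite /aa /ww /choose; case: (unpickle n) => [[[i g] r]|]; last by split; [left|].
case: excluded_middle_informative => [[hi hd]|_]; last by split; [left|].
split => //; case: i hi {hd} => [|k] hi /=; first by left.
by right; exists k; split => //; rewrite bl_nth.
Qed.

Lemma sched_fair : forall m g x, clover_set s0 bb m x -> dom (run g) x ->
  exists m', (m <= m')%N /\ ww m' = g /\ aa m' = x.
Proof.
move=> m g x hx hd.
have [i [him hix]] : exists i, i <= m /\ forall n, m <= n -> nth s0 (s0 :: bl n) i = x.
  case: hx => [->|[k [hk ->]]]; first by exists 0.
  exists k.+1; split => // n hn /=; apply: bl_nth; exact: leq_trans hk hn.
have hinj : injective (fun r => pickle ((i, g, r) : decT)).
  by move=> r1 r2 /(pcan_inj pickleK) [].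
case: (inj_unbounded hinj m) => r hr.
exists (pickle ((i, g, r) : decT)); split => //.
rewrite /ww /aa /choose pickleK.
case: excluded_middle_informative => [_|hn]; first by rewrite hix.
by case: hn; split; [apply: leq_trans hr|rewrite hix].
Qed.

Lemma sched_stop : clover_terminates s0 -> exists M, clover_stop (clover_set s0 bb M).
Proof.
move=> ht; apply: NNPP => hno; apply: ht.
exists ww, aa, bb; split; last exact: sched_fair.
move=> m; split; first by move=> hs; apply: hno; exists m.
case: (choose_spec m) => h1 h2; split => //.
by rewrite bb_eq; apply: hacc.
Qed.

Lemma sched_acc k : exists g x, clover_set s0 bb k x /\ accel g x (bb k).
Proof.
case: (choose_spec k) => h1 h2; exists (ww k), (aa k); split => //.
by rewrite bb_eq; apply: hacc.
Qed.

End Sched.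

Section Final.
Variables (T : TS) (s0 : st T).
Hypothesis Hc : complete_ts T.
Let Hpo : partial_order (@le T). Proof. by case: Hc. Qed.
Let Hpc : forall f, partial_continuous (@le T) (act f). Proof. by case: Hc => _ [_ []]. Qed.

Inductive accp : seq (seq (lab T)) -> st T -> Prop :=
| accp0 : accp [::] s0
| accpS p g x y : accp p x -> accel g x y -> accp (rcons p g) y.

Lemma paths (b : nat -> st T) M :
  (forall k, exists g x, clover_set s0 b k x /\ accel g x (b k)) ->
  exists ws, forall x, clover_set s0 b M x ->
    exists p pre post, ws = pre ++ p ++ post /\ accp p x.
Proof.
move=> hb.
have hp : forall m x, clover_set s0 b m x -> exists p, accp p x.
  elim=> [|m IH] x.
    by case=> [->|[k []]] //; exists [::]; constructor.
  case/A_succ => [/IH //|->].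
  case: (hb m) => g [y [hy hacc]]; case: (IH y hy) => p hpy.
  by exists (rcons p g); apply: accpS hpy hacc.
elim: M => [|M [ws hws]].
  exists [::] => x [->|[k []]] //; by exists [::], [::], [::]; split => //; constructor.
case: (hp M.+1 (b M)) => [|pM hpM]; first by right; exists M.
exists (ws ++ pM) => x /A_succ [hx|->].
  case: (hws x hx) => p [pre [post [-> hpx]]].
  by exists p, pre, (post ++ pM); split => //; rewrite !catA.
by exists pM, ws, [::]; rewrite cats0.
Qed.

Variables (Q : finType) (delta : Q -> lab T -> option Q) (q0 : Q).
Local Notation P := (sync_product delta).
Local Notation C := (cl (@le P) (cover ((s0, q0) : st P))).

Lemma drun_cat (u v : seq (lab T)) q :
  drun delta (u ++ v) q = match drun delta u q with Some q' => drun delta v q' | None => None end.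
Proof. by elim: u q => [|f u IH] q //=; case: (delta q f). Qed.

Lemma prod_run (u : seq (lab P)) s q :
  run u ((s, q) : st P) = match run (map val u) s, drun delta (map val u) q with
                 | Some s', Some q' => Some (s', q') | _, _ => None end.
Proof.
elim: u s q => [|f u IH] s q //=.
case: (act (sval f) s) => [s'|] //; case: (delta q (sval f)) => [q'|] //; last by case: (run _ _).
Qed.

Lemma drun_all (u : seq (lab T)) q : drun delta u q <> None ->
  all (fun f => [exists q, delta q f != None]) u.
Proof.
elim: u q => [|f u IH] q //=.
case E: (delta q f) => [q'|] // h.
rewrite (IH q' h) andbT; apply/existsP; exists q; by rewrite E.
Qed.

Lemma C_step x q (g : seq (lab T)) z q' : C (x, q) -> run g x = Some z ->
  drun delta g q = Some q' -> C (z, q').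
Proof.
move=> hC hz hq.
have hall := drun_all (_ : drun delta g q <> None); rewrite hq in hall.
have hm := map_val_pmap (prod_lab delta) (hall (fun h : Some q' = None => ltac:(discriminate))).
have hr : run (pmap insub g : seq (lab P)) ((x, q) : st P) = Some ((z, q') : st P).
  by rewrite prod_run hm hz hq.
have htc := clcover_tclosed (prod_po delta Hc) (prod_pc Hc) (s0 := ((s0, q0) : st P)).
exact: (tclosed_run htc hC hr).
Qed.

Variable ws : seq (seq (lab T)).
Hypothesis hkey : forall u, drun delta u q0 <> None <-> exists v, in_lang ws (u ++ v).

Lemma lang_rcons (p : seq (seq (lab T))) g u n :
  in_lang p u -> in_lang (rcons p g) (u ++ flatten (nseq n g)).
Proof.
move=> h; rewrite -cats1; apply: in_lang_cat => //.
by rewrite -[flatten _]cats0; apply: in_lang_pow.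
Qed.

Lemma R p c : accp p c -> forall pre post, ws = pre ++ p ++ post ->
  exists q u, C (c, q) /\ in_lang p u /\ drun delta u q0 = Some q.
Proof.
elim=> [|{}p g x y hp IH hacc] pre post hws.
  exists q0, [::]; split; last by split.
  by apply: sub_cl; apply: (cover_s0 (prod_po delta Hc)).
case: (IH pre (g :: post)); first by rewrite hws -cats1 -!catA.
move=> q [u [hC [hin hdu]]].
have hdr : forall n, exists qn, drun delta (flatten (nseq n g)) q = Some qn.
  move=> n; have : drun delta (u ++ flatten (nseq n g)) q0 <> None.
    apply/hkey; exists [::]; rewrite cats0 hws; apply: in_lang_pre.
    rewrite -cats1 -catA; apply: (in_lang_cat (ws1 := p) (u1 := u) (u2 := flatten (nseq n g))) => //; rewrite -[flatten _]cats0; apply: in_lang_pow; apply: in_lang_nil.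
  by rewrite drun_cat hdu; case: (drun _ _ q) => [qn|] // _; exists qn.
case: (choice_fun hdr) => qf hqf.
have hwit : forall n, in_lang (rcons p g) (u ++ flatten (nseq n g)) /\
    drun delta (u ++ flatten (nseq n g)) q0 = Some (qf n).
  by move=> n; split; [apply: lang_rcons|rewrite drun_cat hdu hqf].
case: hacc => gx [hg [[hlt hl]|[hnlt ->]]].
- case: (pigeon qf) => qs hqs.
  have hdef : forall n, exists z, run (flatten (nseq n g)) x = Some z.
    move=> n; case: (iterp_def Hpo Hpc hg (proj1 hlt) n) => z hz.
    by exists z; rewrite -iterp_run.
  pose D := fun pz : st P => exists i, run (flatten (nseq i g)) x = Some pz.1 /\ qf i = qs /\ pz.2 = qs.
  have hDq : forall d, D d -> d.2 = qs by move=> d [i [_ [_ ->]]].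
  have hchain : forall n k z z', run (flatten (nseq n g)) x = Some z ->
      run (flatten (nseq (n + k) g)) x = Some z' -> le z z'.
    move=> n k z z'; rewrite -!iterp_run; exact: (iterp_chain Hpo Hpc hg (proj1 hlt)).
  have hD : directed (@le P) D.
    split.
      case: (hqs 0) => i [_ hi]; case: (hdef i) => z hz.
      by exists (z, qs), i.
    move=> [z1 r1] [z2 r2] [i1 [h1 [_ /= ->]]] [i2 [h2 [_ /= ->]]].
    case: (hqs (maxn i1 i2)) => i [hi hqi]; case: (hdef i) => z hz.
    exists (z, qs); split; first by exists i.
    split; split => //=.
      by apply: (hchain i1 (i - i1)) h1 _; rewrite subnKC // (leq_trans (leq_maxl _ _) hi).
    by apply: (hchain i2 (i - i2)) h2 _; rewrite subnKC // (leq_trans (leq_maxr _ _) hi).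
  have hlub : is_lub (@le P) D (y, qs).
    apply: lub_mk => //; first by case: hD.
    split.
      move=> z [[z' r] [[i [hi _]] /= <-]].
      by apply: (lub_ub hl); exists i; rewrite iterp_run.
    move=> u' hu'; case: hl => _; apply=> z [n hz].
    rewrite iterp_run in hz.
    case: (hqs n) => i [hni hqi]; case: (hdef i) => z' hz'.
    apply: (ltrans Hpo (hchain n (i - n) z z' hz _)); first by rewrite subnKC.
    by apply: hu'; exists (z', qs); split => //; exists i.
  have hyC : C (y, qs).
    apply: (closed_lub (cl_closed _ _) hD hlub) => -[z r] [i [hz [hqi /= ->]]].
    by rewrite -hqi; apply: (C_step hC hz (hqf i)).
  case: (hqs 0) => i [_ hqi].
  exists qs, (u ++ flatten (nseq i g)); split => //.
  by case: (hwit i) => h1 h2; split => //; rewrite h2 hqi.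
- exists (qf 1), (u ++ flatten (nseq 1 g)); split; last exact: hwit.
  by apply: (C_step hC _ (hqf 1)); rewrite /= cats0.
Qed.

End Final.

Lemma down_tclosed (T : TS) (A : st T -> Prop) :
  (forall f, partial_continuous (@le T) (act f)) -> partial_order (@le T) ->
  clover_stop A -> tclosed (down (@le T) A).
Proof.
move=> Hpc Hpo hstop f y y' [a [ha hya]] hy.
case: (pc_mono Hpo (Hpc f) hya hy) => a' [ha' hle].
by apply: hstop; exists a'; split => //; exists a, f.
Qed.

Theorem term_strong (T : TS) (s0 : st T) :
  complete_ts T -> infty_effective T -> clover_terminates s0 -> strongly_clover_flattable s0.
Proof.
move=> Hc [_ [_ [_ [acc hacc]]]] ht.
have Hpo : partial_order (@le T) by case: Hc.
have Hpc : forall f, partial_continuous (@le T) (act f) by case: Hc => _ [_ []].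
case: (sched_stop hacc ht) => M hstop.
case: (paths M (@sched_acc T s0 acc hacc)) => ws hws.
case: (dfa_exists ws) => Q [delta [q0 [hrl hkey]]].
exists Q, delta, q0; split => // x; split.
- apply: cl_min; first exact: cl_closed.
  move=> c [y0 [z [hy0 [[u hu] hcz]]]].
  have hdt := down_tclosed Hpc Hpo hstop.
  have hy0A : down (@le T) (clover_set s0 (bb s0 acc) M) y0.
    by exists s0; split => //; left.
  case: (tclosed_run hdt hy0A hu) => a [ha hza].
  case: (hws a ha) => p [pre [post [hw hp]]].
  case: (R Hc hkey hp hw) => q [u' [hC _]].
  apply: (closed_down (cl_closed _ _) _ (ltrans Hpo hcz hza)).
  by apply: sub_cl; exists (a, q).
- apply: cl_min; first exact: cl_closed.
  move=> _ [p [hp <-]].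
  have hcont : scott_continuous (@le (sync_product delta)) (@le T) fst.
    by split; [move=> ? ? []|move=> D l hD hl; apply: lub_fst].
  have hcl := pre_closed Hpo hcont (cl_closed (@le T) (cover s0)).
  apply: (cl_min hcl _ hp) => y [y1 [z [hy1 [[u hu] hyz]]]].
  apply: sub_cl; exists y1.1, z.1; split; first by case: hy1.
  split; last by case: hyz.
  exists (map val u).
  have hmor : ts_morphism (fst : st (sync_product delta) -> st T) val.
    by move=> f s s'; apply: prod_act_fst.
  exact: (morph_run hmor hu).
Qed.

Theorem main_equiv (T : TS) (s0 : st T) :
  complete_ts T -> infty_effective T ->
  (clover_flattable s0 <-> weakly_clover_flattable s0) /\
  (weakly_clover_flattable s0 <-> strongly_clover_flattable s0) /\
  (strongly_clover_flattable s0 <-> clover_terminates s0).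
Proof.
move=> Hc He.
have h12 := @clover_weak T s0 Hc.
have h24 := @weak_term T s0 Hc.
have h43 := @term_strong T s0 Hc He.
have h31 := @strong_clover T s0 Hc.
split; first by split => // h; apply: h31; apply: h43; apply: h24.
split; first by split => h; [apply: h43; apply: h24 | apply: h12; apply: h31].
by split => h; [apply: h24; apply: h12; apply: h31 | apply: h43].
Qed.


Unset Implicit Arguments.

Theorem theorem5p21 (T : TS) (s0 : st T) :
  complete_ts T -> infty_effective T ->
  (clover_flattable s0 <-> weakly_clover_flattable s0) /\
  (weakly_clover_flattable s0 <-> strongly_clover_flattable s0) /\
  (strongly_clover_flattable s0 <-> clover_terminates s0).
Proof. exact: main_equiv. Qed.
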